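(* Let $G_L\le GL(7,\mathbb{C})$ be the group generated by the permutation matrices $(12),(23),(34),(67)$ and the matrix $A$ defined in the context. Then $G_L$ is isomorphic to the Coxeter group $W(D_5)$, which has order $1920$.
   Context: A permutation $\sigma\in S_7$ is identified with the $7\times7$ permutation matrix sending the standard basis vector $e_i$ to $e_{\sigma(i)}$. The matrix $A\in GL(7,\mathbb{C})$ is \[ A=\begin{pmatrix} 1&0&0&0&0&0&0\\ 0&1&0&0&0&0&0\\ 0&0&-1&0&0&0&1\\ 0&0&0&-1&0&0&1\\ 0&0&-1&-1&1&0&1\\ 0&0&-1&-1&0&1&1\\ 0&0&0&0&0&0&1 \end{pmatrix}. \] $W(D_5)$ denotes the Coxeter group of type $D_5$. *)

(* Defs.v *)
From mathcomp Require Import all_boot all_order all_algebra all_fingroup all_field.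
Set Implicit Arguments. Unset Strict Implicit. Unset Printing Implicit Defensive.
Import GRing.Theory Num.Theory.
Local Open Scope ring_scope.

(* Matrices over the complex numbers: we use algC (algebraic complex numbers);
   all matrices involved have integer entries. *)

(* Permutation matrix of s : 'S_n, sending e_i to e_(s i):
   column i has its single 1 in row (s i). *)
Definition permM (n : nat) (s : 'S_n) : 'M[algC]_n :=
  \matrix_(r, c) (r == s c)%:R.

Definition mx_of_rows (n : nat) (rows : seq (seq int)) : 'M[algC]_n :=
  \matrix_(i, j) ((nth 0%Z (nth [::] rows i) j)%:~R).

(* The matrix A of the context (rows 1..7 correspond to indices 0..6). *)
Definition A7 : 'M[algC]_7 := mx_of_rows 7
  [:: [:: 1; 0; 0; 0; 0; 0; 0];
      [:: 0; 1; 0; 0; 0; 0; 0];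
      [:: 0; 0; -1; 0; 0; 0; 1];
      [:: 0; 0; 0; -1; 0; 0; 1];
      [:: 0; 0; -1; -1; 1; 0; 1];
      [:: 0; 0; -1; -1; 0; 1; 1];
      [:: 0; 0; 0; 0; 0; 0; 1]]%Z.

(* The transposition (a b) (1-based, as in the paper) as a 7x7 permutation matrix. *)
Definition tr7 (a b : nat) : 'M[algC]_7 := permM (tperm (inord a.-1 : 'I_7) (inord b.-1)).

Inductive generated (n : nat) (S : seq 'M[algC]_n) : 'M[algC]_n -> Prop :=
  | gen_one : generated S 1%:M
  | gen_gen x : x \in S -> generated S x
  | gen_mul x y : generated S x -> generated S y -> generated S (x *m y)
  | gen_inv x : generated S x -> generated S (invmx x).

Definition GL_gens : seq 'M[algC]_7 :=
  [:: tr7 1 2; tr7 2 3; tr7 3 4; tr7 6 7; A7].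

Definition G_L : 'M[algC]_7 -> Prop := generated GL_gens.

(* The Coxeter group W(D_5), realized (as the Weyl group of the root system D_5)
   as the reflection group in R^5 (here over algC) generated by the reflections
   s_alpha = I - alpha alpha^T (alpha of squared length 2) in the simple roots
   e1-e2, e2-e3, e3-e4, e4-e5, e4+e5. *)
Definition refl5 (alpha : 'cV[algC]_5) : 'M[algC]_5 := 1%:M - alpha *m alpha^T.

Definition vec5 (l : seq int) : 'cV[algC]_5 := \col_i ((nth 0%Z l i)%:~R).

Definition D5_simple_roots : seq 'cV[algC]_5 :=
  [:: vec5 [:: 1; -1; 0; 0; 0]; vec5 [:: 0; 1; -1; 0; 0]; vec5 [:: 0; 0; 1; -1; 0];
      vec5 [:: 0; 0; 0; 1; -1]; vec5 [:: 0; 0; 0; 1; 1]]%Z.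

Definition WD5 : 'M[algC]_5 -> Prop := generated (map refl5 D5_simple_roots).

Definition mx_group_isomorphic (m n : nat)
  (G : 'M[algC]_m -> Prop) (H : 'M[algC]_n -> Prop) : Prop :=
  exists f : 'M[algC]_m -> 'M[algC]_n,
    [/\ (forall x, G x -> H (f x)),
        (forall x y, G x -> G y -> f (x *m y) = f x *m f y),
        (forall x y, G x -> G y -> f x = f y -> x = y)
      & (forall y, H y -> exists2 x, G x & f x = y)].

Definition mx_group_order (n : nat) (G : 'M[algC]_n -> Prop) (k : nat) : Prop :=
  exists s : seq 'M[algC]_n, [/\ uniq s, size s = k & forall x, G x <-> x \in s].

(* Main.v *)
Require Import Defs.
From mathcomp Require Import all_boot all_order all_algebra all_fingroup all_field.
Set Implicit Arguments. Unset Strict Implicit. Unset Printing Implicit Defensive.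
Import GRing.Theory Num.Theory.

Definition cm := seq (seq int).
Definition entry (a : cm) (i j : nat) : int := nth 0%Z (nth [::] a i) j.
Definition cmul (n : nat) (a b : cm) : cm :=
  mkseq (fun i => mkseq (fun j =>
    foldr (fun k acc => (entry a i k * entry b k j + acc)%R) 0%R (iota 0 n)) n) n.
Definition idc (n : nat) : cm := mkseq (fun i => mkseq (fun j => Posz ((i == j) : nat)) n) n.
Definition build (n : nat) (S : seq cm) (pg : seq (nat * nat)) : seq cm :=
  foldl (fun acc p => rcons acc (cmul n (nth [::] acc p.1) (nth [::] S p.2))) [:: idc n] pg.
Definition tcm (a b : nat) : cm :=
  mkseq (fun r => mkseq (fun c => Posz ((r == (if c == a then b else if c == b then a else c)) : nat)) 7) 7.
Definition rcm (l : seq int) : cm :=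
  mkseq (fun i => mkseq (fun j => (Posz ((i == j) : nat) - nth 0%Z l i * nth 0%Z l j)%R) 5) 5.
Definition A7rows : cm :=
  [:: [:: 1; 0; 0; 0; 0; 0; 0];
      [:: 0; 1; 0; 0; 0; 0; 0];
      [:: 0; 0; -1; 0; 0; 0; 1];
      [:: 0; 0; 0; -1; 0; 0; 1];
      [:: 0; 0; -1; -1; 1; 0; 1];
      [:: 0; 0; -1; -1; 0; 1; 1];
      [:: 0; 0; 0; 0; 0; 0; 1]]%Z.
Definition roots_t : seq (seq int) :=
  [:: [:: 1; -1; 0; 0; 0]; [:: 0; 1; -1; 0; 0]; [:: 0; 0; 1; -1; 0];
      [:: 0; 0; 0; 1; -1]; [:: 0; 0; 0; 1; 1]]%Z.
Definition G7c : seq cm := [:: tcm 0 1; tcm 1 2; tcm 2 3; tcm 5 6; A7rows].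
Definition S5c : seq cm := map rcm roots_t.
Definition Hc : seq cm := [:: [:: [:: 0; 1; 0; 0; 0]; [:: 1; 0; 0; 0; 0]; [:: 0; 0; 1; 0; 0]; [:: 0; 0; 0; 1; 0]; [:: 0; 0; 0; 0; 1]]; [:: [:: 1; 0; 0; 0; 0]; [:: 0; 0; 1; 0; 0]; [:: 0; 1; 0; 0; 0]; [:: 0; 0; 0; 1; 0]; [:: 0; 0; 0; 0; 1]]; [:: [:: 0; -1; 0; 0; 0]; [:: -1; 0; 0; 0; 0]; [:: 0; 0; 1; 0; 0]; [:: 0; 0; 0; 1; 0]; [:: 0; 0; 0; 0; 1]]; [:: [:: 1; 0; 0; 0; 0]; [:: 0; 1; 0; 0; 0]; [:: 0; 0; 1; 0; 0]; [:: 0; 0; 0; 0; 1]; [:: 0; 0; 0; 1; 0]]; [:: [:: 0; -1; 0; 0; 0]; [:: -1; 0; 0; 0; 0]; [:: 0; 0; 0; 1; 0]; [:: 0; 0; 1; 0; 0]; [:: 0; 0; 0; 0; 1]]]%Z.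
Definition pg_t : seq (nat * nat) := [:: (0,0); (0,1); (0,2); (0,3); (0,4); (1,1); (1,2); (1,3); (1,4); (2,0); (2,2); (2,3); (2,4); (3,1); (3,3); (3,4); (4,4); (5,1); (5,3); (6,0); (6,2); (6,3); (6,4); (7,1); (7,3); (7,4); (8,4); (9,1); (9,3); (10,2); (10,3); (10,4); (11,1); (11,3); (11,4); (12,4); (13,1); (13,3); (14,0); (14,3); (14,4); (15,4); (16,1); (16,3); (17,1); (17,3); (18,0); (18,2); (18,3); (18,4); (19,4); (20,2); (20,3); (20,4); (21,1); (21,3); (21,4); (22,4); (23,1); (23,3); (24,0); (24,3); (24,4); (25,4); (26,1); (26,3); (27,1); (27,3); (28,0); (28,2); (28,3); (28,4); (29,4); (30,1); (30,3); (30,4); (31,4); (32,1); (32,3); (33,0); (33,3); (33,4); (34,4); (35,1); (35,3); (36,1); (36,3); (37,0); (37,2); (37,3); (37,4); (38,4); (39,3); (39,4); (40,4); (41,1); (41,3); (42,1); (43,0); (43,2); (43,3); (43,4); (45,0); (45,2); (45,3); (45,4); (47,2); (47,3); (47,4); (48,3); (48,4); (49,4); (50,3); (51,1); (52,1); (52,3); (52,4); (53,4); (54,1); (54,3); (55,0); (55,3); (55,4); (56,4); (57,1); (57,3); (58,1); (58,3); (59,0); (59,2); (59,3); (59,4); (60,4); (61,3); (61,4); (62,4); (63,1); (63,3); (64,1); (65,0); (65,2); (65,3); (65,4); (67,0); (67,2); (67,3); (67,4); (69,2); (69,3); (69,4); (70,3); (70,4); (71,4); (72,3); (73,1); (74,0);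 (74,3); (74,4); (75,4); (76,1); (76,3); (77,1); (77,3); (78,0); (78,2); (78,3); (78,4); (79,4); (80,3); (80,4); (81,4); (82,3); (83,1); (84,0); (84,3); (86,0); (86,2); (86,3); (86,4); (88,2); (88,3); (88,4); (89,3); (90,4); (91,3); (92,1); (93,4); (94,1); (94,3); (95,1); (95,3); (96,0); (96,3); (97,4); (98,0); (98,2); (98,4); (99,2); (99,3); (99,4); (100,3); (101,4); (102,3); (103,2); (103,3); (103,4); (104,3); (104,4); (105,4); (106,3); (107,1); (107,3); (107,4); (108,4); (109,1); (109,3); (110,4); (111,3); (112,1); (112,3); (113,4); (114,0); (114,2); (114,4); (115,0); (115,3); (115,4); (116,4); (117,1); (117,3); (118,1); (118,3); (119,0); (119,2); (119,3); (119,4); (120,4); (121,3); (121,4); (122,4); (123,3); (124,1); (125,0); (125,3); (127,0); (127,2); (127,3); (127,4); (129,2); (129,3); (129,4); (130,3); (131,4); (132,3); (133,1); (134,4); (135,1); (135,3); (136,1); (136,3); (137,0); (137,3); (138,4); (139,0); (139,2); (139,4); (140,2); (140,3); (140,4); (141,3); (142,4); (143,3); (144,2); (144,3); (144,4); (145,3); (145,4); (146,4); (147,3); (148,1); (148,3); (148,4); (149,4); (150,1); (150,3); (151,4); (152,3); (153,1); (153,3); (154,4); (155,0); (155,2); (155,4); (156,3); (156,4); (157,4); (158,1); (158,3); (159,1); (160,0); (160,2); (160,3); (160,4); (162,0); (162,2); (162,3); (162,4); (164,2); (164,3); (164,4); (165,3); (165,4); (166,4); (167,3); (168,1); (169,4);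 (170,1); (170,3); (173,0); (174,3); (175,4); (176,2); (176,3); (176,4); (177,3); (178,4); (179,3); (180,1); (180,3); (181,4); (182,1); (182,3); (183,4); (184,1); (184,3); (185,4); (186,0); (186,2); (186,4); (187,1); (187,3); (188,0); (188,2); (188,3); (188,4); (189,4); (190,0); (190,3); (192,3); (194,1); (195,2); (195,4); (198,1); (198,3); (199,4); (200,1); (200,3); (201,4); (202,1); (203,4); (204,1); (204,3); (204,4); (205,4); (206,1); (206,3); (207,4); (209,1); (209,3); (210,4); (211,3); (211,4); (212,4); (213,1); (213,3); (214,1); (214,3); (215,2); (215,3); (215,4); (216,4); (219,0); (219,3); (219,4); (222,2); (222,4); (223,4); (225,3); (225,4); (226,4); (227,3); (228,1); (229,0); (229,3); (231,0); (231,2); (231,3); (231,4); (233,2); (233,3); (233,4); (234,3); (235,4); (236,3); (237,1); (238,4); (239,1); (239,3); (242,0); (243,3); (244,4); (245,2); (245,3); (245,4); (246,3); (247,4); (248,3); (249,1); (249,3); (250,4); (251,1); (251,3); (252,4); (253,1); (253,3); (254,4); (255,0); (255,2); (255,4); (256,1); (256,3); (257,0); (257,2); (257,3); (257,4); (258,4); (259,0); (259,3); (261,3); (263,1); (264,2); (264,4); (267,1); (267,3); (268,4); (269,1); (269,3); (270,4); (271,1); (272,4); (273,1); (273,3); (273,4); (274,4); (275,1); (275,3); (276,4); (278,1); (278,3); (279,4); (280,3); (280,4); (281,4); (282,1); (282,3); (283,1); (283,3); (284,2); (284,3); (284,4); (285,4); (288,0); (288,3); (288,4); (291,2); (291,4);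 (292,4); (294,4); (295,1); (295,3); (296,1); (296,3); (297,0); (297,3); (298,4); (299,0); (299,2); (299,4); (300,2); (300,3); (300,4); (301,3); (302,4); (303,3); (304,2); (304,3); (304,4); (305,3); (305,4); (306,4); (307,3); (308,1); (308,3); (308,4); (309,4); (310,1); (310,3); (311,4); (312,3); (313,1); (313,3); (314,4); (315,0); (315,2); (315,4); (316,1); (317,2); (317,3); (317,4); (320,4); (321,1); (322,1); (322,3); (323,4); (324,1); (324,3); (325,4); (326,1); (326,3); (327,4); (328,3); (328,4); (329,4); (330,1); (330,3); (331,2); (331,3); (331,4); (332,4); (334,0); (334,3); (334,4); (337,2); (337,4); (338,4); (340,0); (340,2); (340,3); (340,4); (342,2); (342,3); (342,4); (343,3); (343,4); (344,4); (345,3); (346,1); (347,3); (350,0); (351,1); (352,1); (353,3); (353,4); (354,4); (355,1); (356,2); (356,3); (356,4); (357,4); (359,0); (361,3); (361,4); (362,4); (363,1); (364,1); (364,3); (365,2); (365,3); (365,4); (366,4); (368,0); (368,3); (371,4); (372,1); (372,3); (373,1); (374,2); (374,3); (374,4); (376,0); (376,2); (376,3); (376,4); (378,3); (378,4); (379,4); (380,3); (381,1); (382,3); (382,4); (383,4); (385,1); (385,4); (386,1); (388,4); (389,3); (392,0); (393,3); (394,4); (395,2); (395,3); (395,4); (396,3); (397,4); (398,3); (399,1); (399,3); (400,4); (401,1); (401,3); (402,4); (403,1); (403,3); (404,4); (405,0); (405,2); (405,4); (406,1); (407,3); (410,4); (411,1); (412,1); (412,3); (413,4); (414,1); (414,3);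 (415,4); (416,1); (416,3); (417,4); (418,3); (418,4); (419,4); (420,1); (420,3); (421,2); (421,3); (421,4); (422,4); (424,0); (424,3); (424,4); (427,2); (427,4); (428,4); (430,0); (430,2); (430,3); (430,4); (432,2); (432,3); (432,4); (433,3); (434,4); (435,3); (436,1); (437,3); (440,0); (441,1); (442,1); (443,3); (443,4); (444,4); (445,1); (446,2); (446,3); (446,4); (447,4); (449,0); (451,3); (451,4); (452,4); (453,1); (454,1); (454,3); (455,2); (455,3); (455,4); (456,4); (458,0); (458,3); (461,4); (462,3); (463,1); (464,3); (466,0); (466,2); (466,3); (466,4); (468,3); (469,4); (470,3); (471,1); (472,3); (472,4); (473,4); (475,1); (475,4); (476,1); (478,1); (478,3); (479,0); (479,3); (480,4); (481,0); (481,3); (483,3); (485,1); (486,2); (486,4); (489,3); (490,4); (491,3); (492,4); (493,1); (494,4); (495,1); (495,3); (495,4); (496,4); (497,1); (497,3); (498,4); (500,1); (500,3); (501,4); (502,3); (502,4); (503,4); (504,1); (504,3); (505,1); (505,3); (506,2); (506,3); (506,4); (507,4); (510,0); (510,3); (510,4); (513,2); (513,4); (514,4); (516,2); (516,4); (517,3); (518,4); (519,3); (520,1); (521,0); (522,3); (522,4); (523,4); (524,1); (524,3); (525,2); (525,3); (525,4); (526,4); (528,0); (531,4); (532,1); (532,3); (533,1); (534,0); (534,2); (534,3); (534,4); (536,3); (536,4); (537,4); (538,3); (539,1); (540,3); (540,4); (543,1); (543,4); (544,1); (546,2); (546,3); (546,4); (547,3); (547,4); (548,4); (549,3); (550,3);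 (551,4); (552,3); (553,4); (554,3); (555,1); (555,3); (556,4); (557,0); (557,2); (557,4); (560,4); (561,2); (561,4); (562,4); (563,1); (563,3); (564,1); (565,0); (565,2); (565,4); (566,3); (566,4); (567,4); (568,3); (569,1); (571,4); (572,1); (572,3); (573,1); (574,2); (574,4); (575,0); (575,2); (575,3); (575,4); (577,3); (577,4); (578,4); (579,3); (580,1); (581,3); (583,1); (583,3); (584,0); (584,3); (585,4); (586,2); (586,4); (587,3); (588,4); (589,3); (590,2); (590,3); (590,4); (591,3); (591,4); (592,4); (593,3); (594,4); (595,3); (596,1); (596,3); (597,4); (598,2); (598,4); (599,4); (600,1); (602,4); (603,1); (604,2); (604,4); (608,4); (609,1); (610,1); (610,3); (611,4); (612,1); (612,3); (613,4); (614,1); (614,3); (615,4); (616,3); (616,4); (617,4); (618,1); (618,3); (619,2); (619,3); (619,4); (620,4); (622,0); (622,3); (622,4); (625,2); (625,4); (626,4); (629,4); (630,1); (631,0); (632,3); (632,4); (633,4); (634,1); (634,3); (635,2); (635,3); (635,4); (636,4); (638,0); (641,4); (642,1); (642,3); (643,1); (644,0); (644,2); (644,3); (644,4); (646,3); (647,4); (648,3); (649,1); (650,3); (650,4); (653,1); (653,4); (654,1); (656,2); (656,3); (656,4); (657,3); (658,4); (659,3); (660,3); (661,4); (662,3); (663,4); (664,1); (664,3); (665,4); (666,0); (666,2); (666,4); (669,4); (670,2); (670,4); (671,4); (672,3); (673,1); (674,0); (674,2); (674,4); (675,3); (676,4); (677,3); (678,1); (680,4); (681,3); (682,1); (684,0);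 (684,2); (684,3); (684,4); (686,3); (687,4); (688,3); (689,1); (690,3); (695,4); (696,2); (696,3); (696,4); (697,3); (698,4); (699,3); (700,4); (701,1); (701,3); (702,4); (703,2); (703,4); (704,4); (705,1); (707,4); (708,1); (709,2); (709,4); (710,0); (710,3); (712,3); (714,1); (715,3); (718,0); (721,4); (722,1); (723,4); (725,0); (727,3); (727,4); (728,4); (729,1); (730,1); (730,3); (731,2); (731,3); (731,4); (732,4); (734,0); (734,3); (737,4); (738,3); (739,1); (740,3); (742,0); (742,2); (742,3); (742,4); (744,3); (745,4); (746,3); (747,1); (748,3); (748,4); (749,4); (751,1); (751,4); (752,1); (756,4); (757,1); (758,4); (759,0); (759,2); (759,4); (761,4); (762,1); (762,3); (763,1); (764,0); (764,2); (764,3); (764,4); (766,3); (766,4); (767,4); (768,3); (769,1); (771,1); (771,3); (772,3); (773,4); (774,2); (774,4); (775,2); (775,3); (775,4); (776,3); (776,4); (777,4); (778,3); (779,4); (780,3); (781,1); (781,3); (782,4); (783,2); (783,4); (785,1); (786,4); (787,1); (788,2); (788,4); (789,3); (790,4); (791,3); (792,4); (794,1); (794,3); (795,4); (796,4); (797,1); (797,3); (798,4); (801,0); (801,3); (801,4); (804,2); (804,4); (805,4); (807,1); (807,3); (808,4); (809,3); (810,1); (810,3); (811,3); (812,4); (813,2); (813,4); (814,2); (814,4); (815,4); (816,3); (817,4); (818,3); (819,1); (819,3); (820,4); (821,2); (821,4); (822,1); (822,3); (823,0); (823,3); (824,4); (825,2); (825,4); (827,3); (828,2); (828,3); (828,4);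 (829,3); (829,4); (830,4); (831,3); (832,4); (833,3); (834,1); (834,3); (835,4); (836,2); (836,4); (838,0); (838,3); (840,3); (842,1); (845,4); (846,1); (847,4); (848,3); (848,4); (849,4); (850,1); (850,3); (851,4); (853,1); (853,3); (854,4); (857,0); (857,3); (857,4); (860,4); (862,1); (863,2); (863,4); (864,1); (864,3); (865,2); (865,4); (866,4); (867,3); (868,1); (869,0); (870,3); (870,4); (871,4); (872,1); (872,3); (873,2); (873,3); (873,4); (874,4); (876,0); (879,4); (880,3); (881,1); (882,0); (882,2); (882,3); (882,4); (884,3); (885,4); (886,3); (887,1); (888,3); (888,4); (891,1); (891,4); (892,1); (894,1); (895,0); (895,2); (895,4); (897,4); (898,1); (898,3); (899,1); (900,0); (900,2); (900,3); (900,4); (902,3); (903,4); (904,3); (905,1); (907,1); (907,3); (908,3); (909,4); (910,2); (910,4); (911,2); (911,3); (911,4); (912,3); (912,4); (913,4); (914,3); (915,4); (916,1); (916,3); (917,4); (918,2); (918,4); (920,1); (921,4); (922,1); (923,2); (923,4); (924,3); (925,4); (926,3); (927,4); (928,1); (928,3); (929,4); (930,4); (931,1); (931,3); (932,4); (934,0); (934,3); (934,4); (937,4); (938,4); (940,3); (942,3); (946,2); (946,4); (948,3); (949,4); (950,1); (950,3); (951,4); (952,2); (952,4); (956,2); (956,3); (956,4); (957,3); (958,4); (959,3); (960,4); (961,1); (961,3); (962,4); (963,2); (963,4); (965,1); (966,3); (967,4); (968,1); (968,3); (969,4); (970,1); (970,3); (971,4); (973,0); (973,3); (973,4); (976,4);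 (978,1); (979,2); (979,4); (980,3); (983,3); (984,3); (987,0); (990,1); (991,0); (991,2); (991,4); (992,1); (994,4); (995,3); (996,1); (998,0); (998,2); (998,3); (998,4); (1000,3); (1001,4); (1002,3); (1003,1); (1004,3); (1010,2); (1010,3); (1010,4); (1011,3); (1012,4); (1013,3); (1014,4); (1015,1); (1015,3); (1016,4); (1017,2); (1017,4); (1018,4); (1019,1); (1021,4); (1022,1); (1023,2); (1023,4); (1025,0); (1027,2); (1027,4); (1028,4); (1029,3); (1030,1); (1030,3); (1031,3); (1032,4); (1033,2); (1033,4); (1034,2); (1034,4); (1035,3); (1035,4); (1036,4); (1037,3); (1038,4); (1039,3); (1040,1); (1040,3); (1041,4); (1042,2); (1042,4); (1043,0); (1043,3); (1046,1); (1049,3); (1049,4); (1050,4); (1051,1); (1051,3); (1052,4); (1054,1); (1054,3); (1055,4); (1058,0); (1058,3); (1058,4); (1061,4); (1063,2); (1063,4); (1064,1); (1064,3); (1065,2); (1065,4); (1066,4); (1067,3); (1068,4); (1069,1); (1069,3); (1070,4); (1072,0); (1072,3); (1076,0); (1076,3); (1078,1); (1079,3); (1079,4); (1080,4); (1082,4); (1083,1); (1085,3); (1087,3); (1088,4); (1089,0); (1089,3); (1092,1); (1095,4); (1096,1); (1096,3); (1098,4); (1101,0); (1101,3); (1106,0); (1106,3); (1108,3); (1110,1); (1113,4); (1114,3); (1114,4); (1115,4); (1116,1); (1116,3); (1117,4); (1119,1); (1119,3); (1120,4); (1123,0); (1123,3); (1123,4); (1126,4); (1128,3); (1131,0); (1133,0);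 (1135,4); (1137,1); (1137,3); (1138,3); (1138,4); (1139,4); (1141,0); (1141,3); (1144,3); (1144,4); (1145,4); (1148,2); (1148,4); (1149,4); (1150,3); (1151,0); (1151,3); (1154,3); (1155,3); (1156,4); (1157,0); (1157,2); (1157,4); (1159,4); (1160,3); (1161,1); (1162,0); (1162,2); (1162,3); (1162,4); (1164,3); (1165,4); (1166,3); (1167,1); (1172,2); (1172,3); (1172,4); (1173,3); (1174,4); (1175,3); (1176,4); (1177,1); (1177,3); (1178,4); (1179,2); (1179,4); (1181,1); (1182,4); (1183,1); (1184,2); (1184,4); (1185,0); (1186,2); (1186,4); (1187,4); (1188,3); (1189,1); (1189,3); (1190,3); (1191,4); (1192,2); (1192,4); (1193,2); (1193,4); (1194,3); (1194,4); (1195,4); (1196,3); (1197,4); (1198,1); (1198,3); (1199,4); (1200,2); (1200,4); (1201,0); (1201,3); (1204,1); (1207,3); (1207,4); (1208,4); (1209,1); (1209,3); (1210,4); (1212,1); (1212,3); (1213,4); (1215,0); (1215,3); (1215,4); (1218,4); (1220,2); (1220,4); (1221,1); (1221,3); (1222,4); (1223,4); (1224,3); (1225,4); (1226,1); (1226,3); (1227,4); (1229,0); (1233,0); (1233,3); (1235,1); (1236,3); (1236,4); (1239,1); (1242,4); (1244,1); (1244,3); (1245,4); (1247,0); (1247,3); (1252,3); (1253,4); (1254,1); (1254,3); (1255,4); (1256,1); (1256,3); (1257,4); (1259,0); (1259,3); (1259,4); (1262,4); (1264,0); (1265,4); (1266,1); (1266,3); (1267,3); (1267,4); (1268,4); (1270,0);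 (1273,3); (1273,4); (1277,2); (1277,4); (1279,3); (1281,4); (1285,2); (1285,4); (1287,3); (1292,2); (1292,3); (1292,4); (1293,3); (1294,4); (1295,3); (1296,4); (1297,1); (1297,3); (1298,4); (1299,2); (1299,4); (1301,3); (1302,4); (1303,1); (1303,3); (1304,4); (1305,1); (1305,3); (1306,4); (1308,0); (1308,3); (1308,4); (1313,1); (1314,2); (1314,4); (1318,3); (1320,4); (1321,1); (1321,3); (1324,0); (1324,3); (1327,1); (1330,4); (1331,1); (1331,3); (1332,4); (1334,1); (1334,3); (1335,4); (1338,0); (1338,3); (1338,4); (1341,4); (1343,3); (1345,0); (1346,4); (1348,1); (1348,3); (1349,3); (1349,4); (1350,4); (1352,0); (1352,3); (1355,3); (1355,4); (1356,4); (1359,4); (1360,3); (1361,0); (1361,3); (1368,0); (1368,3); (1370,1); (1371,3); (1373,3); (1376,4); (1377,1); (1384,3); (1386,0); (1388,3); (1389,4); (1391,3); (1392,4); (1393,3); (1396,0); (1398,4); (1400,1); (1400,3); (1401,3); (1402,4); (1404,0); (1404,3); (1407,3); (1407,4); (1408,4); (1415,0); (1415,3); (1415,4); (1417,4); (1418,3); (1420,3); (1422,4); (1425,4); (1426,3); (1427,3); (1428,4); (1429,3); (1434,2); (1434,4); (1440,2); (1440,4); (1441,3); (1442,4); (1443,3); (1444,4); (1445,1); (1445,3); (1446,4); (1447,2); (1447,4); (1448,3); (1449,4); (1450,1); (1450,3); (1451,4); (1452,1); (1452,3); (1453,4); (1455,0); (1455,3); (1455,4); (1460,2); (1460,4); (1464,3);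 (1466,4); (1467,1); (1467,3); (1470,0); (1470,3); (1473,1); (1476,4); (1477,1); (1477,3); (1478,4); (1480,1); (1480,3); (1481,4); (1483,0); (1483,3); (1483,4); (1486,4); (1488,3); (1490,0); (1491,4); (1493,1); (1493,3); (1494,3); (1494,4); (1495,4); (1497,0); (1497,3); (1500,3); (1500,4); (1501,4); (1504,4); (1505,3); (1506,0); (1506,3); (1512,0); (1512,3); (1514,1); (1516,3); (1520,1); (1523,3); (1524,4); (1526,3); (1528,4); (1529,1); (1529,3); (1530,3); (1531,4); (1533,0); (1536,3); (1536,4); (1542,0); (1542,3); (1542,4); (1544,4); (1545,3); (1550,4); (1551,3); (1552,4); (1555,1); (1555,3); (1557,3); (1558,4); (1559,1); (1559,3); (1560,4); (1561,1); (1561,3); (1562,4); (1564,0); (1564,3); (1564,4); (1569,4); (1570,1); (1570,3); (1571,3); (1571,4); (1572,4); (1574,0); (1577,3); (1577,4); (1580,2); (1580,4); (1582,3); (1585,3); (1587,3); (1589,0); (1591,3); (1592,4); (1594,0); (1594,3); (1597,3); (1597,4); (1598,4); (1604,0); (1604,3); (1606,4); (1607,3); (1609,3); (1611,4); (1616,3); (1618,3); (1623,1); (1627,4); (1629,4); (1634,0); (1634,3); (1636,4); (1638,3); (1640,4); (1643,3); (1643,4); (1644,4); (1645,3); (1647,4); (1649,1); (1656,1); (1658,1); (1658,3); (1659,4); (1660,1); (1660,3); (1661,4); (1663,0); (1663,3); (1663,4); (1668,4); (1669,1); (1669,3); (1670,3); (1670,4); (1671,4); (1673,0); (1676,3); (1676,4);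 (1680,3); (1683,3); (1685,3); (1687,0); (1689,3); (1690,4); (1692,0); (1692,3); (1695,3); (1695,4); (1696,4); (1702,0); (1702,3); (1704,4); (1705,3); (1707,3); (1709,4); (1714,3); (1721,4); (1725,0); (1725,3); (1727,4); (1732,4); (1733,4); (1734,3); (1736,4); (1740,3); (1742,4); (1743,1); (1743,3); (1744,3); (1745,4); (1747,0); (1750,3); (1750,4); (1754,0); (1754,3); (1754,4); (1756,4); (1757,3); (1762,4); (1763,3); (1765,4); (1768,4); (1770,3); (1772,4); (1775,3); (1776,4); (1778,4); (1780,1); (1783,2); (1783,4); (1785,1); (1786,3); (1787,4); (1790,1); (1791,4); (1792,3); (1794,4); (1796,2); (1796,4); (1798,3); (1799,4); (1804,3); (1808,0); (1808,3); (1810,4); (1811,3); (1817,4); (1820,4); (1822,3); (1824,4); (1828,4); (1830,4); (1832,1); (1836,4); (1838,3); (1840,4); (1842,4); (1844,0); (1844,3); (1846,4); (1851,4); (1852,4); (1853,3); (1855,4); (1861,1); (1862,4); (1865,4); (1868,4); (1869,4); (1871,4); (1872,1); (1873,4); (1875,4); (1877,4); (1881,4); (1883,4); (1887,1); (1892,4); (1896,4); (1900,4); (1902,4); (1906,1)].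
Definition succ_t : seq (seq nat) := [:: [:: 1; 2; 3; 4; 5]; [:: 0; 6; 7; 8; 9]; [:: 10; 0; 11; 12; 13]; [:: 7; 14; 0; 15; 16]; [:: 8; 12; 15; 0; 17]; [:: 9; 18; 16; 19; 0]; [:: 20; 1; 21; 22; 23]; [:: 3; 24; 1; 25; 26]; [:: 4; 22; 25; 1; 27]; [:: 5; 28; 26; 29; 1]; [:: 2; 20; 30; 31; 32]; [:: 30; 33; 2; 34; 35]; [:: 31; 4; 34; 2; 36]; [:: 32; 37; 35; 38; 2]; [:: 39; 3; 33; 40; 41]; [:: 25; 40; 4; 3; 42]; [:: 26; 43; 5; 44; 3]; [:: 27; 45; 42; 46; 4]; [:: 47; 5; 48; 49; 50]; [:: 29; 49; 44; 5; 51]; [:: 6; 10; 52; 53; 54]; [:: 52; 55; 6; 56; 57]; [:: 53; 8; 56; 6; 58]; [:: 54; 59; 57; 60; 6]; [:: 61; 7; 55; 62; 63]; [:: 15; 62; 8; 7; 64]; [:: 16; 65; 9; 66; 7]; [:: 17; 67; 64; 68; 8]; [:: 69; 9; 70; 71; 72]; [:: 19; 71; 66; 9; 73]; [:: 11; 74; 10; 75; 76]; [:: 12; 53; 75; 10; 77]; [:: 13; 78; 76; 79; 10]; [:: 80; 11; 14; 81; 82]; [:: 75; 81; 12; 11; 83]; [:: 76; 84; 13; 85; 11]; [:: 77; 86; 83; 87; 12]; [:: 88; 13; 89; 90; 91]; [:: 79; 90; 85; 13; 92]; [:: 14; 61; 80; 93; 94]; [:: 93; 15; 81; 14; 95]; [::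 94; 96; 82; 97; 14]; [:: 64; 98; 17; 51; 15]; [:: 99; 16; 100; 101; 102]; [:: 66; 101; 19; 16; 46]; [:: 103; 17; 104; 105; 106]; [:: 68; 105; 51; 17; 44]; [:: 18; 69; 107; 108; 109]; [:: 107; 100; 18; 110; 111]; [:: 108; 19; 110; 18; 112]; [:: 109; 91; 111; 113; 18]; [:: 73; 114; 46; 42; 19]; [:: 21; 115; 20; 116; 117]; [:: 22; 31; 116; 20; 118]; [:: 23; 119; 117; 120; 20]; [:: 121; 21; 24; 122; 123]; [:: 116; 122; 22; 21; 124]; [:: 117; 125; 23; 126; 21]; [:: 118; 127; 124; 128; 22]; [:: 129; 23; 130; 131; 132]; [:: 120; 131; 126; 23; 133]; [:: 24; 39; 121; 134; 135]; [:: 134; 25; 122; 24; 136]; [:: 135; 137; 123; 138; 24]; [:: 42; 139; 27; 73; 25]; [:: 140; 26; 141; 142; 143]; [:: 44; 142; 29; 26; 68]; [:: 144; 27; 145; 146; 147]; [:: 46; 146; 73; 27; 66]; [:: 28; 47; 148; 149; 150]; [:: 148; 141; 28; 151; 152]; [:: 149; 29; 151; 28; 153]; [:: 150; 132; 152; 154; 28]; [:: 51; 155; 68; 64; 29]; [:: 156; 30; 115; 157; 158]; [:: 34; 157; 31; 30; 159]; [:: 35; 160; 32; 161; 30]; [:: 36; 162; 159; 163; 31]; [:: 164; 32; 165; 166; 167]; [:: 38; 166; 161; 32; 168]; [:: 33; 156; 39; 169; 170]; [:: 169; 34; 40; 33; 171]; [:: 170; 111; 41; 172; 33]; [:: 159;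 173; 36; 92; 34]; [:: 174; 35; 102; 175; 100]; [:: 161; 175; 38; 35; 87]; [:: 176; 36; 177; 178; 179]; [:: 163; 178; 92; 36; 85]; [:: 37; 164; 180; 181; 182]; [:: 180; 102; 37; 183; 96]; [:: 181; 38; 183; 37; 184]; [:: 182; 50; 96; 185; 37]; [:: 168; 186; 87; 83; 38]; [:: 40; 134; 169; 39; 187]; [:: 41; 188; 170; 189; 39]; [:: 187; 190; 171; 191; 40]; [:: 192; 41; 91; 193; 89]; [:: 189; 193; 172; 41; 194]; [:: 195; 42; 196; 114; 197]; [:: 43; 140; 198; 199; 200]; [:: 198; 48; 43; 201; 84]; [:: 199; 44; 201; 43; 202]; [:: 200; 89; 84; 203; 43]; [:: 45; 144; 204; 205; 206]; [:: 204; 196; 45; 207; 208]; [:: 205; 46; 207; 45; 209]; [:: 206; 179; 208; 210; 45]; [:: 48; 211; 47; 212; 213]; [:: 49; 149; 212; 47; 214]; [:: 50; 215; 213; 216; 47]; [:: 212; 201; 49; 48; 217]; [:: 213; 82; 50; 218; 48]; [:: 214; 219; 217; 220; 49]; [:: 216; 185; 218; 50; 221]; [:: 222; 51; 223; 98; 224]; [:: 225; 52; 74; 226; 227]; [:: 56; 226; 53; 52; 228]; [:: 57; 229; 54; 230; 52]; [:: 58; 231; 228; 232; 53]; [:: 233; 54; 234; 235; 236]; [:: 60; 235; 230; 54; 237]; [:: 55; 225; 61; 238; 239]; [:: 238; 56; 62; 55; 240]; [:: 239; 152; 63; 241; 55]; [:: 228; 242; 58; 133; 56]; [:: 243; 57;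 143; 244; 141]; [:: 230; 244; 60; 57; 128]; [:: 245; 58; 246; 247; 248]; [:: 232; 247; 133; 58; 126]; [:: 59; 233; 249; 250; 251]; [:: 249; 143; 59; 252; 137]; [:: 250; 60; 252; 59; 253]; [:: 251; 72; 137; 254; 59]; [:: 237; 255; 128; 124; 60]; [:: 62; 93; 238; 61; 256]; [:: 63; 257; 239; 258; 61]; [:: 256; 259; 240; 260; 62]; [:: 261; 63; 132; 262; 130]; [:: 258; 262; 241; 63; 263]; [:: 264; 64; 265; 155; 266]; [:: 65; 99; 267; 268; 269]; [:: 267; 70; 65; 270; 125]; [:: 268; 66; 270; 65; 271]; [:: 269; 130; 125; 272; 65]; [:: 67; 103; 273; 274; 275]; [:: 273; 265; 67; 276; 277]; [:: 274; 68; 276; 67; 278]; [:: 275; 248; 277; 279; 67]; [:: 70; 280; 69; 281; 282]; [:: 71; 108; 281; 69; 283]; [:: 72; 284; 282; 285; 69]; [:: 281; 270; 71; 70; 286]; [:: 282; 123; 72; 287; 70]; [:: 283; 288; 286; 289; 71]; [:: 285; 254; 287; 72; 290]; [:: 291; 73; 292; 139; 293]; [:: 74; 80; 225; 294; 295]; [:: 294; 75; 226; 74; 296]; [:: 295; 297; 227; 298; 74]; [:: 83; 299; 77; 168; 75]; [:: 300; 76; 301; 302; 303]; [:: 85; 302; 79; 76; 163]; [:: 304; 77; 305; 306; 307]; [:: 87; 306; 168; 77; 161]; [:: 78; 88; 308; 309; 310]; [:: 308; 301; 78; 311; 312]; [:: 309; 79; 311; 78; 313]; [:: 310; 236; 312;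 314; 78]; [:: 92; 315; 163; 159; 79]; [:: 81; 294; 93; 80; 316]; [:: 82; 317; 94; 318; 80]; [:: 316; 208; 95; 194; 81]; [:: 318; 218; 97; 82; 191]; [:: 319; 83; 197; 186; 196]; [:: 84; 300; 200; 320; 198]; [:: 320; 85; 203; 84; 321]; [:: 86; 304; 322; 323; 324]; [:: 322; 197; 86; 325; 190]; [:: 323; 87; 325; 86; 326]; [:: 324; 106; 190; 327; 86]; [:: 89; 328; 88; 329; 192]; [:: 90; 309; 329; 88; 330]; [:: 91; 331; 192; 332; 88]; [:: 329; 203; 90; 89; 333]; [:: 330; 334; 333; 335; 90]; [:: 332; 113; 193; 91; 336]; [:: 337; 92; 338; 173; 339]; [:: 95; 340; 316; 341; 93]; [:: 342; 94; 343; 344; 345]; [:: 97; 344; 318; 94; 346]; [:: 347; 95; 179; 348; 177]; [:: 341; 348; 194; 95; 172]; [:: 96; 342; 182; 349; 180]; [:: 349; 97; 185; 96; 335]; [:: 346; 350; 191; 171; 97]; [:: 98; 264; 351; 222; 352]; [:: 351; 104; 98; 223; 173]; [:: 352; 177; 173; 338; 98]; [:: 100; 353; 99; 354; 174]; [:: 101; 268; 354; 99; 355]; [:: 102; 356; 174; 357; 99]; [:: 354; 110; 101; 100; 358]; [:: 355; 359; 358; 321; 101]; [:: 357; 183; 175; 102; 360]; [:: 104; 361; 103; 362; 363]; [:: 105; 274; 362; 103; 364]; [:: 106; 365; 363; 366; 103]; [:: 362; 223; 105; 104; 367]; [:: 363; 171; 106; 350; 104]; [:: 364; 368; 367; 369;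 105]; [:: 366; 327; 350; 106; 370]; [:: 353; 107; 280; 371; 372]; [:: 110; 371; 108; 107; 373]; [:: 111; 374; 109; 375; 107]; [:: 112; 376; 373; 377; 108]; [:: 331; 109; 378; 379; 380]; [:: 113; 379; 375; 109; 381]; [:: 373; 367; 112; 221; 110]; [:: 375; 172; 113; 111; 220]; [:: 382; 112; 368; 383; 384]; [:: 377; 383; 221; 112; 218]; [:: 381; 370; 220; 217; 113]; [:: 114; 291; 385; 195; 386]; [:: 385; 207; 114; 196; 387]; [:: 386; 384; 387; 339; 114]; [:: 115; 121; 156; 388; 389]; [:: 388; 116; 157; 115; 390]; [:: 389; 312; 158; 391; 115]; [:: 124; 392; 118; 237; 116]; [:: 393; 117; 303; 394; 301]; [:: 126; 394; 120; 117; 232]; [:: 395; 118; 396; 397; 398]; [:: 128; 397; 237; 118; 230]; [:: 119; 129; 399; 400; 401]; [:: 399; 303; 119; 402; 297]; [:: 400; 120; 402; 119; 403]; [:: 401; 167; 297; 404; 119]; [:: 133; 405; 232; 228; 120]; [:: 122; 388; 134; 121; 406]; [:: 123; 407; 135; 408; 121]; [:: 406; 277; 136; 263; 122]; [:: 408; 287; 138; 123; 260]; [:: 409; 124; 266; 255; 265]; [:: 125; 393; 269; 410; 267]; [:: 410; 126; 272; 125; 411]; [:: 127; 395; 412; 413; 414]; [:: 412; 266; 127; 415; 259]; [:: 413; 128; 415; 127; 416]; [:: 414; 147; 259; 417; 127]; [:: 130; 418; 129; 419; 261]; [:: 131; 400; 419; 129; 420]; [:: 132; 421; 261; 422; 129];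 [:: 419; 272; 131; 130; 423]; [:: 420; 424; 423; 425; 131]; [:: 422; 154; 262; 132; 426]; [:: 427; 133; 428; 242; 429]; [:: 136; 430; 406; 431; 134]; [:: 432; 135; 433; 434; 435]; [:: 138; 434; 408; 135; 436]; [:: 437; 136; 248; 438; 246]; [:: 431; 438; 263; 136; 241]; [:: 137; 432; 251; 439; 249]; [:: 439; 138; 254; 137; 425]; [:: 436; 440; 260; 240; 138]; [:: 139; 195; 441; 291; 442]; [:: 441; 145; 139; 292; 242]; [:: 442; 246; 242; 428; 139]; [:: 141; 443; 140; 444; 243]; [:: 142; 199; 444; 140; 445]; [:: 143; 446; 243; 447; 140]; [:: 444; 151; 142; 141; 448]; [:: 445; 449; 448; 411; 142]; [:: 447; 252; 244; 143; 450]; [:: 145; 451; 144; 452; 453]; [:: 146; 205; 452; 144; 454]; [:: 147; 455; 453; 456; 144]; [:: 452; 292; 146; 145; 457]; [:: 453; 240; 147; 440; 145]; [:: 454; 458; 457; 459; 146]; [:: 456; 417; 440; 147; 460]; [:: 443; 148; 211; 461; 462]; [:: 151; 461; 149; 148; 463]; [:: 152; 464; 150; 465; 148]; [:: 153; 466; 463; 467; 149]; [:: 421; 150; 468; 469; 470]; [:: 154; 469; 465; 150; 471]; [:: 463; 457; 153; 290; 151]; [:: 465; 241; 154; 152; 289]; [:: 472; 153; 458; 473; 474]; [:: 467; 473; 290; 153; 287]; [:: 471; 460; 289; 286; 154]; [:: 155; 222; 475; 264; 476]; [:: 475; 276; 155; 265; 477]; [:: 476; 474; 477; 429; 155]; [::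 157; 169; 388; 156; 478]; [:: 158; 479; 389; 480; 156]; [:: 478; 481; 390; 482; 157]; [:: 483; 158; 236; 484; 234]; [:: 480; 484; 391; 158; 485]; [:: 486; 159; 487; 315; 488]; [:: 160; 174; 489; 490; 491]; [:: 489; 165; 160; 492; 229]; [:: 490; 161; 492; 160; 493]; [:: 491; 234; 229; 494; 160]; [:: 162; 176; 495; 496; 497]; [:: 495; 487; 162; 498; 499]; [:: 496; 163; 498; 162; 500]; [:: 497; 398; 499; 501; 162]; [:: 165; 502; 164; 503; 504]; [:: 166; 181; 503; 164; 505]; [:: 167; 506; 504; 507; 164]; [:: 503; 492; 166; 165; 508]; [:: 504; 227; 167; 509; 165]; [:: 505; 510; 508; 511; 166]; [:: 507; 404; 509; 167; 512]; [:: 513; 168; 514; 299; 515]; [:: 171; 516; 187; 346; 169]; [:: 374; 170; 517; 518; 519]; [:: 172; 518; 189; 170; 341]; [:: 173; 486; 352; 337; 351]; [:: 175; 490; 357; 174; 520]; [:: 520; 521; 360; 202; 175]; [:: 177; 522; 176; 523; 347]; [:: 178; 496; 523; 176; 524]; [:: 179; 525; 347; 526; 176]; [:: 523; 338; 178; 177; 527]; [:: 524; 528; 527; 529; 178]; [:: 526; 210; 348; 179; 530]; [:: 356; 180; 502; 531; 532]; [:: 183; 531; 181; 180; 533]; [:: 184; 534; 533; 535; 181]; [:: 215; 182; 536; 537; 538]; [:: 185; 537; 349; 182; 539]; [:: 533; 527; 184; 336; 183]; [:: 540; 184; 528; 541; 542]; [:: 535; 541; 336; 184; 193]; [:: 539;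 530; 335; 333; 185]; [:: 186; 513; 543; 319; 544]; [:: 543; 325; 186; 197; 545]; [:: 544; 542; 545; 224; 186]; [:: 546; 187; 547; 548; 549]; [:: 191; 548; 346; 187; 318]; [:: 188; 192; 550; 551; 552]; [:: 550; 517; 188; 553; 554]; [:: 551; 189; 553; 188; 555]; [:: 552; 435; 554; 556; 188]; [:: 194; 557; 341; 316; 189]; [:: 190; 546; 324; 558; 322]; [:: 558; 191; 327; 190; 529]; [:: 193; 551; 332; 192; 535]; [:: 559; 194; 210; 208; 369]; [:: 196; 560; 195; 385; 319]; [:: 197; 561; 319; 543; 195]; [:: 211; 198; 443; 562; 563]; [:: 201; 562; 199; 198; 564]; [:: 202; 565; 564; 520; 199]; [:: 328; 200; 566; 567; 568]; [:: 203; 567; 320; 200; 569]; [:: 564; 387; 202; 360; 201]; [:: 570; 202; 384; 521; 368]; [:: 569; 545; 321; 358; 203]; [:: 560; 204; 451; 571; 572]; [:: 207; 571; 205; 204; 573]; [:: 208; 574; 206; 559; 204]; [:: 209; 575; 573; 576; 205]; [:: 525; 206; 577; 578; 579]; [:: 210; 578; 559; 206; 580]; [:: 573; 217; 209; 370; 207]; [:: 581; 209; 219; 582; 359]; [:: 576; 582; 370; 209; 350]; [:: 580; 221; 369; 367; 210]; [:: 562; 212; 461; 211; 583]; [:: 563; 584; 462; 585; 211]; [:: 217; 586; 214; 381; 212]; [:: 317; 213; 587; 588; 589]; [:: 218; 588; 216; 213; 377]; [:: 590; 214; 591; 592; 593]; [:: 220; 592; 381; 214; 375]; [:: 536; 587;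 215; 594; 595]; [:: 537; 216; 594; 215; 596]; [:: 538; 470; 595; 597; 215]; [:: 221; 598; 377; 373; 216]; [:: 219; 590; 581; 599; 600]; [:: 599; 220; 582; 219; 601]; [:: 600; 224; 359; 542; 219]; [:: 223; 602; 222; 351; 603]; [:: 224; 604; 603; 544; 222]; [:: 603; 358; 224; 545; 223]; [:: 226; 238; 294; 225; 605]; [:: 227; 554; 295; 606; 225]; [:: 605; 499; 296; 485; 226]; [:: 606; 509; 298; 227; 482]; [:: 607; 228; 488; 405; 487]; [:: 229; 243; 491; 608; 489]; [:: 608; 230; 494; 229; 609]; [:: 231; 245; 610; 611; 612]; [:: 610; 488; 231; 613; 481]; [:: 611; 232; 613; 231; 614]; [:: 612; 307; 481; 615; 231]; [:: 234; 616; 233; 617; 483]; [:: 235; 250; 617; 233; 618]; [:: 236; 619; 483; 620; 233]; [:: 617; 494; 235; 234; 621]; [:: 618; 622; 621; 623; 235]; [:: 620; 314; 484; 236; 624]; [:: 625; 237; 626; 392; 627]; [:: 240; 628; 256; 436; 238]; [:: 464; 239; 519; 629; 517]; [:: 241; 629; 258; 239; 431]; [:: 242; 607; 442; 427; 441]; [:: 244; 608; 447; 243; 630]; [:: 630; 631; 450; 271; 244]; [:: 246; 632; 245; 633; 437]; [:: 247; 611; 633; 245; 634]; [:: 248; 635; 437; 636; 245]; [:: 633; 428; 247; 246; 637]; [:: 634; 638; 637; 639; 247]; [:: 636; 279; 438; 248; 640]; [:: 446; 249; 616; 641; 642]; [:: 252; 641; 250; 249; 643]; [:: 253; 644; 643;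 645; 250]; [:: 284; 251; 646; 647; 648]; [:: 254; 647; 439; 251; 649]; [:: 643; 637; 253; 426; 252]; [:: 650; 253; 638; 651; 652]; [:: 645; 651; 426; 253; 262]; [:: 649; 640; 425; 423; 254]; [:: 255; 625; 653; 409; 654]; [:: 653; 415; 255; 266; 655]; [:: 654; 652; 655; 293; 255]; [:: 656; 256; 657; 658; 659]; [:: 260; 658; 436; 256; 408]; [:: 257; 261; 660; 661; 662]; [:: 660; 519; 257; 663; 479]; [:: 661; 258; 663; 257; 664]; [:: 662; 345; 479; 665; 257]; [:: 263; 666; 431; 406; 258]; [:: 259; 656; 414; 667; 412]; [:: 667; 260; 417; 259; 639]; [:: 262; 661; 422; 261; 645]; [:: 668; 263; 279; 277; 459]; [:: 265; 669; 264; 475; 409]; [:: 266; 670; 409; 653; 264]; [:: 280; 267; 353; 671; 672]; [:: 270; 671; 268; 267; 673]; [:: 271; 674; 673; 630; 268]; [:: 418; 269; 675; 676; 677]; [:: 272; 676; 410; 269; 678]; [:: 673; 477; 271; 450; 270]; [:: 679; 271; 474; 631; 458]; [:: 678; 655; 411; 448; 272]; [:: 669; 273; 361; 680; 681]; [:: 276; 680; 274; 273; 682]; [:: 277; 683; 275; 668; 273]; [:: 278; 684; 682; 685; 274]; [:: 635; 275; 686; 687; 688]; [:: 279; 687; 668; 275; 689]; [:: 682; 286; 278; 460; 276]; [:: 690; 278; 288; 691; 449]; [:: 685; 691; 460; 278; 440]; [:: 689; 290; 459; 457; 279]; [:: 671; 281; 371; 280; 692]; [:: 672; 595; 372; 693;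 280]; [:: 286; 694; 283; 471; 281]; [:: 407; 282; 589; 695; 587]; [:: 287; 695; 285; 282; 467]; [:: 696; 283; 697; 698; 699]; [:: 289; 698; 471; 283; 465]; [:: 646; 589; 284; 700; 584]; [:: 647; 285; 700; 284; 701]; [:: 648; 380; 584; 702; 284]; [:: 290; 703; 467; 463; 285]; [:: 288; 696; 690; 704; 705]; [:: 704; 289; 691; 288; 706]; [:: 705; 293; 449; 652; 288]; [:: 292; 707; 291; 441; 708]; [:: 293; 709; 708; 654; 291]; [:: 708; 448; 293; 655; 292]; [:: 296; 710; 605; 711; 294]; [:: 712; 295; 435; 713; 433]; [:: 298; 713; 606; 295; 714]; [:: 715; 296; 398; 716; 396]; [:: 711; 716; 485; 296; 391]; [:: 297; 712; 401; 717; 399]; [:: 717; 298; 404; 297; 623]; [:: 714; 718; 482; 390; 298]; [:: 299; 319; 719; 513; 720]; [:: 719; 305; 299; 514; 392]; [:: 720; 396; 392; 626; 299]; [:: 301; 566; 300; 721; 393]; [:: 302; 320; 721; 300; 722]; [:: 303; 675; 393; 723; 300]; [:: 721; 311; 302; 301; 724]; [:: 722; 725; 724; 609; 302]; [:: 723; 402; 394; 303; 726]; [:: 305; 727; 304; 728; 729]; [:: 306; 323; 728; 304; 730]; [:: 307; 731; 729; 732; 304]; [:: 728; 514; 306; 305; 733]; [:: 729; 390; 307; 718; 305]; [:: 730; 734; 733; 735; 306]; [:: 732; 615; 718; 307; 736]; [:: 566; 308; 328; 737; 738]; [:: 311; 737; 309; 308; 739]; [:: 312; 740; 310; 741; 308];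 [:: 313; 742; 739; 743; 309]; [:: 619; 310; 744; 745; 746]; [:: 314; 745; 741; 310; 747]; [:: 739; 733; 313; 512; 311]; [:: 741; 391; 314; 312; 511]; [:: 748; 313; 734; 749; 750]; [:: 743; 749; 512; 313; 509]; [:: 747; 736; 511; 508; 314]; [:: 315; 337; 751; 486; 752]; [:: 751; 498; 315; 487; 753]; [:: 752; 750; 753; 627; 315]; [:: 574; 316; 754; 557; 755]; [:: 587; 343; 317; 756; 407]; [:: 588; 318; 756; 317; 757]; [:: 589; 433; 407; 758; 317]; [:: 321; 759; 569; 355; 320]; [:: 760; 321; 542; 359; 528]; [:: 561; 322; 727; 761; 762]; [:: 325; 761; 323; 322; 763]; [:: 326; 764; 763; 765; 323]; [:: 365; 324; 766; 767; 768]; [:: 327; 767; 558; 324; 769]; [:: 763; 333; 326; 530; 325]; [:: 770; 326; 334; 601; 521]; [:: 765; 601; 530; 326; 348]; [:: 769; 336; 529; 527; 327]; [:: 567; 329; 737; 328; 771]; [:: 568; 772; 738; 773; 328]; [:: 333; 774; 330; 539; 329]; [:: 775; 330; 776; 777; 778]; [:: 335; 777; 539; 330; 349]; [:: 378; 550; 331; 779; 780]; [:: 379; 332; 779; 331; 781]; [:: 380; 746; 780; 782; 331]; [:: 336; 783; 535; 533; 332]; [:: 334; 775; 770; 784; 785]; [:: 784; 335; 601; 334; 582]; [:: 785; 339; 521; 384; 334]; [:: 338; 786; 337; 352; 787]; [:: 339; 788; 787; 386; 337]; [:: 787; 360; 339; 387; 338]; [:: 340; 347; 789; 790; 791]; [::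 789; 754; 340; 792; 793]; [:: 790; 341; 792; 340; 794]; [:: 791; 659; 793; 795; 340]; [:: 343; 536; 342; 796; 740]; [:: 344; 349; 796; 342; 797]; [:: 345; 744; 740; 798; 342]; [:: 796; 756; 344; 343; 799]; [:: 740; 389; 345; 800; 343]; [:: 797; 801; 799; 802; 344]; [:: 798; 665; 800; 345; 803]; [:: 804; 346; 805; 516; 806]; [:: 348; 790; 526; 347; 765]; [:: 350; 804; 366; 363; 576]; [:: 361; 351; 669; 602; 807]; [:: 522; 352; 808; 786; 809]; [:: 371; 354; 671; 353; 810]; [:: 372; 811; 672; 812; 353]; [:: 358; 813; 355; 569; 354]; [:: 814; 355; 815; 759; 816]; [:: 502; 489; 356; 817; 818]; [:: 531; 357; 817; 356; 819]; [:: 532; 677; 818; 820; 356]; [:: 360; 821; 520; 564; 357]; [:: 359; 814; 600; 760; 581]; [:: 602; 362; 680; 361; 822]; [:: 807; 823; 681; 824; 361]; [:: 367; 825; 364; 580; 362]; [:: 516; 363; 826; 804; 827]; [:: 828; 364; 829; 830; 831]; [:: 369; 830; 580; 364; 559]; [:: 766; 826; 365; 832; 833]; [:: 767; 366; 832; 365; 834]; [:: 768; 688; 833; 835; 365]; [:: 370; 836; 576; 573; 366]; [:: 368; 828; 382; 837; 570]; [:: 837; 369; 383; 368; 541]; [:: 810; 838; 692; 839; 371]; [:: 840; 372; 470; 841; 468]; [:: 812; 841; 693; 372; 842]; [:: 825; 373; 843; 598; 844]; [:: 517; 378; 374; 845; 464]; [:: 518; 375; 845; 374; 846]; [:: 519;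 468; 464; 847; 374]; [:: 376; 382; 848; 849; 850]; [:: 848; 843; 376; 851; 852]; [:: 849; 377; 851; 376; 853]; [:: 850; 699; 852; 854; 376]; [:: 779; 845; 379; 378; 855]; [:: 780; 462; 380; 856; 378]; [:: 781; 857; 855; 858; 379]; [:: 782; 702; 856; 380; 859]; [:: 836; 381; 860; 586; 861]; [:: 383; 849; 837; 382; 862]; [:: 384; 863; 570; 785; 382]; [:: 862; 529; 541; 528; 383]; [:: 571; 385; 707; 560; 864]; [:: 387; 865; 386; 787; 385]; [:: 863; 386; 866; 788; 867]; [:: 390; 793; 478; 714; 388]; [:: 391; 800; 480; 389; 711]; [:: 392; 409; 720; 625; 719]; [:: 394; 410; 723; 393; 868]; [:: 868; 869; 726; 493; 394]; [:: 396; 870; 395; 871; 715]; [:: 397; 413; 871; 395; 872]; [:: 398; 873; 715; 874; 395]; [:: 871; 626; 397; 396; 875]; [:: 872; 876; 875; 877; 397]; [:: 874; 501; 716; 398; 878]; [:: 675; 399; 418; 879; 880]; [:: 402; 879; 400; 399; 881]; [:: 403; 882; 881; 883; 400]; [:: 506; 401; 884; 885; 886]; [:: 404; 885; 717; 401; 887]; [:: 881; 875; 403; 624; 402]; [:: 888; 403; 876; 889; 890]; [:: 883; 889; 624; 403; 484]; [:: 887; 878; 623; 621; 404]; [:: 405; 427; 891; 607; 892]; [:: 891; 613; 405; 488; 893]; [:: 892; 890; 893; 515; 405]; [:: 683; 406; 755; 666; 754]; [:: 695; 408; 758; 407; 894]; [:: 411; 895; 678; 445; 410]; [:: 896; 411;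 652; 449; 638]; [:: 670; 412; 870; 897; 898]; [:: 415; 897; 413; 412; 899]; [:: 416; 900; 899; 901; 413]; [:: 455; 414; 902; 903; 904]; [:: 417; 903; 667; 414; 905]; [:: 899; 423; 416; 640; 415]; [:: 906; 416; 424; 706; 631]; [:: 901; 706; 640; 416; 438]; [:: 905; 426; 639; 637; 417]; [:: 676; 419; 879; 418; 907]; [:: 677; 908; 880; 909; 418]; [:: 423; 910; 420; 649; 419]; [:: 911; 420; 912; 913; 914]; [:: 425; 913; 649; 420; 439]; [:: 468; 660; 421; 915; 840]; [:: 469; 422; 915; 421; 916]; [:: 470; 886; 840; 917; 421]; [:: 426; 918; 645; 643; 422]; [:: 424; 911; 906; 919; 920]; [:: 919; 425; 706; 424; 691]; [:: 920; 429; 631; 474; 424]; [:: 428; 921; 427; 442; 922]; [:: 429; 923; 922; 476; 427]; [:: 922; 450; 429; 477; 428]; [:: 430; 437; 924; 925; 926]; [:: 924; 755; 430; 927; 710]; [:: 925; 431; 927; 430; 928]; [:: 926; 549; 710; 929; 430]; [:: 433; 646; 432; 930; 712]; [:: 434; 439; 930; 432; 931]; [:: 435; 884; 712; 932; 432]; [:: 930; 758; 434; 433; 933]; [:: 931; 934; 933; 935; 434]; [:: 932; 556; 713; 435; 936]; [:: 937; 436; 938; 628; 939]; [:: 438; 925; 636; 437; 901]; [:: 440; 937; 456; 453; 685]; [:: 451; 441; 560; 707; 940]; [:: 632; 442; 941; 921; 942]; [:: 461; 444; 562; 443; 943]; [:: 462; 818; 563; 944; 443]; [:: 448; 945; 445;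 678; 444]; [:: 946; 445; 947; 895; 948]; [:: 616; 491; 446; 949; 811]; [:: 641; 447; 949; 446; 950]; [:: 642; 568; 811; 951; 446]; [:: 450; 952; 630; 673; 447]; [:: 449; 946; 705; 896; 690]; [:: 707; 452; 571; 451; 953]; [:: 940; 833; 572; 954; 451]; [:: 457; 955; 454; 689; 452]; [:: 628; 453; 827; 937; 826]; [:: 956; 454; 957; 958; 959]; [:: 459; 958; 689; 454; 668]; [:: 902; 827; 455; 960; 823]; [:: 903; 456; 960; 455; 961]; [:: 904; 579; 823; 962; 455]; [:: 460; 963; 685; 682; 456]; [:: 458; 956; 472; 964; 679]; [:: 964; 459; 473; 458; 651]; [:: 943; 852; 583; 842; 461]; [:: 944; 856; 585; 462; 839]; [:: 955; 463; 844; 703; 843]; [:: 629; 465; 847; 464; 965]; [:: 466; 472; 966; 967; 968]; [:: 966; 844; 466; 969; 838]; [:: 967; 467; 969; 466; 970]; [:: 968; 593; 838; 971; 466]; [:: 915; 847; 469; 468; 972]; [:: 916; 973; 972; 974; 469]; [:: 917; 597; 841; 470; 975]; [:: 963; 471; 976; 694; 977]; [:: 473; 967; 964; 472; 978]; [:: 474; 979; 679; 920; 472]; [:: 978; 639; 651; 638; 473]; [:: 680; 475; 602; 669; 980]; [:: 477; 981; 476; 922; 475]; [:: 979; 476; 982; 923; 983]; [:: 984; 478; 659; 985; 657]; [:: 482; 985; 714; 478; 606]; [:: 479; 483; 662; 986; 660]; [:: 986; 480; 665; 479; 935]; [:: 485; 987; 711; 605; 480]; [:: 481; 984; 612; 988;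 610]; [:: 988; 482; 615; 481; 877]; [:: 484; 986; 620; 483; 883]; [:: 989; 485; 501; 499; 735]; [:: 487; 808; 486; 751; 607]; [:: 488; 941; 607; 891; 486]; [:: 492; 817; 490; 489; 990]; [:: 493; 991; 990; 868; 490]; [:: 494; 949; 608; 491; 992]; [:: 990; 753; 493; 726; 492]; [:: 993; 493; 750; 869; 734]; [:: 992; 893; 609; 724; 494]; [:: 808; 495; 522; 994; 995]; [:: 498; 994; 496; 495; 996]; [:: 499; 997; 497; 989; 495]; [:: 500; 998; 996; 999; 496]; [:: 873; 497; 1000; 1001; 1002]; [:: 501; 1001; 989; 497; 1003]; [:: 996; 508; 500; 736; 498]; [:: 1004; 500; 510; 1005; 725]; [:: 999; 1005; 736; 500; 718]; [:: 1003; 512; 735; 733; 501]; [:: 817; 503; 531; 502; 1006]; [:: 818; 780; 532; 1007; 502]; [:: 508; 1008; 505; 747; 503]; [:: 554; 504; 552; 1009; 550]; [:: 509; 1009; 507; 504; 743]; [:: 1010; 505; 1011; 1012; 1013]; [:: 511; 1012; 747; 505; 741]; [:: 884; 552; 506; 1014; 772]; [:: 885; 507; 1014; 506; 1015]; [:: 886; 538; 772; 1016; 506]; [:: 512; 1017; 743; 739; 507]; [:: 510; 1010; 1004; 1018; 1019]; [:: 1018; 511; 1005; 510; 1020]; [:: 1019; 515; 725; 890; 510]; [:: 514; 1021; 513; 719; 1022]; [:: 515; 1023; 1022; 892; 513]; [:: 1022; 724; 515; 893; 514]; [:: 826; 547; 516; 805; 628]; [:: 827; 657; 628; 938; 516];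 [:: 845; 553; 518; 517; 1024]; [:: 846; 1025; 1024; 894; 518]; [:: 847; 663; 629; 519; 1026]; [:: 1027; 520; 1028; 565; 1029]; [:: 521; 1027; 785; 570; 770]; [:: 786; 523; 994; 522; 1030]; [:: 809; 1031; 995; 1032; 522]; [:: 527; 1033; 524; 769; 523]; [:: 1034; 524; 1035; 1036; 1037]; [:: 529; 1036; 769; 524; 558]; [:: 577; 789; 525; 1038; 1039]; [:: 578; 526; 1038; 525; 1040]; [:: 579; 1002; 1039; 1041; 525]; [:: 530; 1042; 765; 763; 526]; [:: 528; 1034; 540; 862; 760]; [:: 819; 1043; 1006; 1044; 531]; [:: 908; 532; 746; 1045; 744]; [:: 820; 1045; 1007; 532; 1046]; [:: 1033; 533; 1047; 783; 1048]; [:: 534; 540; 1049; 1050; 1051]; [:: 1049; 1047; 534; 1052; 1053]; [:: 1050; 535; 1052; 534; 1054]; [:: 1051; 1013; 1053; 1055; 534]; [:: 594; 796; 537; 536; 1056]; [:: 595; 738; 538; 1057; 536]; [:: 596; 1058; 1056; 1059; 537]; [:: 597; 1016; 1057; 538; 1060]; [:: 1042; 539; 1061; 774; 1062]; [:: 541; 1050; 862; 540; 837]; [:: 542; 1063; 760; 600; 540]; [:: 761; 543; 1021; 561; 1064]; [:: 545; 1065; 544; 603; 543]; [:: 1063; 544; 1066; 604; 1067]; [:: 547; 766; 546; 1068; 997]; [:: 548; 558; 1068; 546; 1069]; [:: 549; 1000; 997; 1070; 546]; [:: 1068; 805; 548; 547; 1071]; [:: 997; 605; 549; 987; 547]; [::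 1069; 1072; 1071; 1073; 548]; [:: 1070; 929; 987; 549; 1074]; [:: 553; 779; 551; 550; 1075]; [:: 555; 1076; 1075; 1077; 551]; [:: 556; 1014; 1009; 552; 1078]; [:: 1075; 1071; 555; 803; 553]; [:: 1009; 606; 556; 554; 802]; [:: 1079; 555; 1072; 1080; 1081]; [:: 1077; 1080; 803; 555; 800]; [:: 1078; 1074; 802; 799; 556]; [:: 557; 559; 1082; 574; 1083]; [:: 1082; 792; 557; 754; 1084]; [:: 1083; 1081; 1084; 939; 557]; [:: 572; 1085; 940; 1086; 560]; [:: 727; 719; 561; 1021; 1087]; [:: 762; 942; 1087; 1088; 561]; [:: 583; 1089; 943; 1090; 562]; [:: 880; 563; 677; 1091; 675]; [:: 585; 1091; 944; 563; 1092]; [:: 865; 564; 1093; 821; 1094]; [:: 565; 570; 1095; 1027; 1096]; [:: 1095; 1093; 565; 1028; 1097]; [:: 1096; 948; 1097; 1098; 565]; [:: 737; 721; 567; 566; 1099]; [:: 738; 672; 568; 1100; 566]; [:: 771; 1101; 1099; 1102; 567]; [:: 773; 951; 1100; 568; 1103]; [:: 1065; 569; 1104; 813; 1105]; [:: 864; 1106; 953; 1107; 571]; [:: 1108; 572; 688; 1109; 686]; [:: 1086; 1109; 954; 572; 1110]; [:: 586; 573; 1111; 836; 1112]; [:: 754; 577; 574; 1082; 683]; [:: 755; 686; 683; 1113; 574]; [:: 575; 581; 1114; 1115; 1116]; [:: 1114; 1111; 575; 1117; 1118]; [:: 1115; 576; 1117; 575; 1119]; [:: 1116; 959; 1118; 1120;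 575]; [:: 1038; 1082; 578; 577; 1121]; [:: 1039; 681; 579; 1122; 577]; [:: 1040; 1123; 1121; 1124; 578]; [:: 1041; 962; 1122; 579; 1125]; [:: 598; 580; 1126; 825; 1127]; [:: 582; 1115; 599; 581; 784]; [:: 1128; 583; 699; 1129; 697]; [:: 1090; 1129; 842; 583; 693]; [:: 584; 880; 648; 1130; 646]; [:: 1130; 585; 702; 584; 974]; [:: 1092; 1131; 839; 692; 585]; [:: 1111; 591; 586; 860; 694]; [:: 1112; 697; 694; 976; 586]; [:: 756; 594; 588; 587; 1132]; [:: 757; 1133; 1132; 965; 588]; [:: 758; 700; 695; 589; 1134]; [:: 591; 1114; 590; 1135; 1136]; [:: 592; 599; 1135; 590; 1137]; [:: 593; 1138; 1136; 1139; 590]; [:: 1135; 860; 592; 591; 1140]; [:: 1136; 692; 593; 1131; 591]; [:: 1137; 1141; 1140; 1142; 592]; [:: 1139; 971; 1131; 593; 1143]; [:: 1056; 1140; 596; 859; 594]; [:: 1057; 693; 597; 595; 858]; [:: 1144; 596; 1141; 1145; 1146]; [:: 1059; 1145; 859; 596; 856]; [:: 1060; 1143; 858; 855; 597]; [:: 1126; 851; 598; 843; 1147]; [:: 1127; 1146; 1147; 977; 598]; [:: 601; 1148; 784; 770; 599]; [:: 604; 600; 1149; 1063; 1150]; [:: 822; 1151; 980; 1152; 602]; [:: 813; 603; 1153; 1065; 1154]; [:: 1149; 1153; 604; 1066; 1155]; [:: 1150; 983; 1155; 1156; 604]; [:: 609; 1157; 992; 722; 608]; [:: 1158; 609; 890;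 725; 876]; [:: 941; 610; 632; 1159; 1160]; [:: 613; 1159; 611; 610; 1161]; [:: 614; 1162; 1161; 1163; 611]; [:: 731; 612; 1164; 1165; 1166]; [:: 615; 1165; 988; 612; 1167]; [:: 1161; 621; 614; 878; 613]; [:: 1168; 614; 622; 1020; 869]; [:: 1163; 1020; 878; 614; 716]; [:: 1167; 624; 877; 875; 615]; [:: 949; 617; 641; 616; 1169]; [:: 811; 840; 642; 1170; 616]; [:: 621; 1171; 618; 887; 617]; [:: 1172; 618; 1173; 1174; 1175]; [:: 623; 1174; 887; 618; 717]; [:: 744; 662; 619; 1176; 908]; [:: 745; 620; 1176; 619; 1177]; [:: 746; 648; 908; 1178; 619]; [:: 624; 1179; 883; 881; 620]; [:: 622; 1172; 1168; 1180; 1181]; [:: 1180; 623; 1020; 622; 1005]; [:: 1181; 627; 869; 750; 622]; [:: 626; 1182; 625; 720; 1183]; [:: 627; 1184; 1183; 752; 625]; [:: 1183; 726; 627; 753; 626]; [:: 965; 1185; 1026; 757; 629]; [:: 1186; 630; 1187; 674; 1188]; [:: 631; 1186; 920; 679; 906]; [:: 921; 633; 1159; 632; 1189]; [:: 942; 1190; 1160; 1191; 632]; [:: 637; 1192; 634; 905; 633]; [:: 1193; 634; 1194; 1195; 1196]; [:: 639; 1195; 905; 634; 667]; [:: 686; 924; 635; 1197; 1108]; [:: 687; 636; 1197; 635; 1198]; [:: 688; 1166; 1108; 1199; 635]; [:: 640; 1200; 901; 899; 636]; [:: 638; 1193; 650; 978; 896]; [:: 950; 1201; 1169; 1202; 641];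 [:: 772; 642; 886; 1203; 884]; [:: 951; 1203; 1170; 642; 1204]; [:: 1192; 643; 1205; 918; 1206]; [:: 644; 650; 1207; 1208; 1209]; [:: 1207; 1205; 644; 1210; 1211]; [:: 1208; 645; 1210; 644; 1212]; [:: 1209; 1175; 1211; 1213; 644]; [:: 700; 930; 647; 646; 1214]; [:: 701; 1215; 1214; 1216; 647]; [:: 702; 1178; 1130; 648; 1217]; [:: 1200; 649; 1218; 910; 1219]; [:: 651; 1208; 978; 650; 964]; [:: 652; 1220; 896; 705; 650]; [:: 897; 653; 1182; 670; 1221]; [:: 655; 1222; 654; 708; 653]; [:: 1220; 654; 1223; 709; 1224]; [:: 657; 902; 656; 1225; 984]; [:: 658; 667; 1225; 656; 1226]; [:: 659; 1164; 984; 1227; 656]; [:: 1225; 938; 658; 657; 1228]; [:: 1226; 1229; 1228; 1230; 658]; [:: 1227; 795; 985; 659; 1231]; [:: 663; 915; 661; 660; 1232]; [:: 664; 1233; 1232; 1234; 661]; [:: 665; 1176; 986; 662; 1235]; [:: 1232; 1228; 664; 936; 663]; [:: 1236; 664; 1229; 1237; 1238]; [:: 1234; 1237; 936; 664; 713]; [:: 1235; 1231; 935; 933; 665]; [:: 666; 668; 1113; 683; 1239]; [:: 1113; 927; 666; 755; 1240]; [:: 1239; 1238; 1240; 806; 666]; [:: 681; 1087; 807; 1241; 669]; [:: 870; 720; 670; 1182; 1085]; [:: 898; 809; 1085; 1242; 670]; [:: 692; 1097; 810; 1092; 671]; [:: 693; 1100; 812; 672; 1090]; [:: 981; 673; 1094;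 952; 1093]; [:: 674; 679; 1243; 1186; 1244]; [:: 1243; 1094; 674; 1187; 1089]; [:: 1244; 816; 1089; 1245; 674]; [:: 879; 723; 676; 675; 1246]; [:: 907; 1247; 1246; 1248; 676]; [:: 909; 820; 1091; 677; 1249]; [:: 1222; 678; 1250; 945; 1251]; [:: 980; 1118; 822; 1110; 680]; [:: 1241; 1122; 824; 681; 1107]; [:: 694; 682; 1112; 963; 1111]; [:: 684; 690; 1252; 1253; 1254]; [:: 1252; 1112; 684; 1255; 1106]; [:: 1253; 685; 1255; 684; 1256]; [:: 1254; 831; 1106; 1257; 684]; [:: 1197; 1113; 687; 686; 1258]; [:: 1198; 1259; 1258; 1260; 687]; [:: 1199; 835; 1109; 688; 1261]; [:: 703; 689; 1262; 955; 1263]; [:: 691; 1253; 704; 690; 919]; [:: 894; 1264; 1134; 846; 695]; [:: 697; 1252; 696; 1265; 1128]; [:: 698; 704; 1265; 696; 1266]; [:: 699; 1267; 1128; 1268; 696]; [:: 1265; 976; 698; 697; 1269]; [:: 1266; 1270; 1269; 1271; 698]; [:: 1268; 854; 1129; 699; 1272]; [:: 1214; 1269; 701; 975; 700]; [:: 1273; 701; 1270; 1274; 1275]; [:: 1216; 1274; 975; 701; 841]; [:: 1217; 1272; 974; 972; 702]; [:: 1262; 969; 703; 844; 1276]; [:: 1263; 1275; 1276; 861; 703]; [:: 706; 1277; 919; 906; 704]; [:: 709; 705; 1278; 1220; 1279]; [:: 953; 1155; 864; 1280; 707]; [:: 945; 708; 1154; 1222; 1153]; [:: 1278; 1154; 709;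 1223; 1151]; [:: 1279; 867; 1151; 1281; 709]; [:: 710; 715; 926; 1282; 924]; [:: 1282; 711; 929; 710; 1230]; [:: 713; 717; 932; 712; 1234]; [:: 1283; 714; 795; 793; 1073]; [:: 716; 1282; 874; 715; 1163]; [:: 718; 1283; 732; 729; 999]; [:: 724; 1284; 722; 992; 721]; [:: 1285; 722; 1286; 1157; 1287]; [:: 726; 1288; 868; 990; 723]; [:: 725; 1285; 1019; 1158; 1004]; [:: 1021; 728; 761; 727; 1289]; [:: 1087; 1039; 762; 1290; 727]; [:: 733; 1291; 730; 1003; 728]; [:: 793; 729; 791; 1283; 789]; [:: 1292; 730; 1293; 1294; 1295]; [:: 735; 1294; 1003; 730; 989]; [:: 1164; 791; 731; 1296; 1031]; [:: 1165; 732; 1296; 731; 1297]; [:: 1166; 768; 1031; 1298; 731]; [:: 736; 1299; 999; 996; 732]; [:: 734; 1292; 748; 1300; 993]; [:: 1300; 735; 749; 734; 889]; [:: 1099; 1053; 771; 1046; 737]; [:: 1100; 1057; 773; 738; 1044]; [:: 1291; 739; 1048; 1017; 1047]; [:: 800; 741; 798; 740; 1077]; [:: 742; 748; 1301; 1302; 1303]; [:: 1301; 1048; 742; 1304; 1043]; [:: 1302; 743; 1304; 742; 1305]; [:: 1303; 778; 1043; 1306; 742]; [:: 1176; 798; 745; 744; 1307]; [:: 1177; 1308; 1307; 1309; 745]; [:: 1178; 782; 1045; 746; 1310]; [:: 1299; 747; 1311; 1008; 1312]; [:: 749; 1302; 1300; 748; 1313]; [:: 750; 1314; 993; 1181; 748];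 [:: 1313; 877; 889; 876; 749]; [:: 994; 751; 786; 808; 1315]; [:: 753; 1316; 752; 1183; 751]; [:: 1314; 752; 1317; 1184; 1318]; [:: 1132; 1084; 757; 1026; 756]; [:: 1319; 757; 1081; 1185; 1072]; [:: 1134; 1240; 894; 1024; 758]; [:: 759; 760; 1320; 814; 1321]; [:: 1320; 1104; 759; 815; 1322]; [:: 1321; 1287; 1322; 1323; 759]; [:: 1064; 1324; 1289; 1325; 761]; [:: 1190; 762; 1002; 1326; 1000]; [:: 1088; 1326; 1290; 762; 1327]; [:: 774; 763; 1328; 1042; 1329]; [:: 764; 770; 1330; 1148; 1331]; [:: 1330; 1328; 764; 1332; 1333]; [:: 1148; 765; 1332; 764; 1334]; [:: 1331; 1295; 1333; 1335; 764]; [:: 832; 1068; 767; 766; 1336]; [:: 833; 995; 768; 1337; 766]; [:: 834; 1338; 1336; 1339; 767]; [:: 835; 1298; 1337; 768; 1340]; [:: 783; 769; 1341; 1033; 1342]; [:: 1343; 771; 1013; 1344; 1011]; [:: 1102; 1344; 1046; 771; 1007]; [:: 1203; 773; 1016; 772; 1309]; [:: 1103; 1345; 1044; 1006; 773]; [:: 1328; 776; 774; 1061; 1008]; [:: 1329; 1011; 1008; 1311; 774]; [:: 776; 1330; 775; 1346; 1347]; [:: 777; 784; 1346; 775; 1348]; [:: 778; 1349; 1347; 1350; 775]; [:: 1346; 1061; 777; 776; 1351]; [:: 1347; 1006; 778; 1345; 776]; [:: 1348; 1352; 1351; 1353; 777]; [:: 1350; 1306; 1345; 778; 1354]; [:: 855;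 1351; 781; 1060; 779]; [:: 856; 1007; 782; 780; 1059]; [:: 1355; 781; 1352; 1356; 1357]; [:: 858; 1356; 1060; 781; 1057]; [:: 859; 1354; 1059; 1056; 782]; [:: 1341; 1052; 783; 1047; 1358]; [:: 1342; 1357; 1358; 1312; 783]; [:: 788; 785; 1359; 863; 1360]; [:: 1030; 1361; 1315; 1362; 786]; [:: 821; 787; 1363; 865; 1364]; [:: 1359; 1363; 788; 866; 1365]; [:: 1360; 1318; 1365; 1366; 788]; [:: 792; 1038; 790; 789; 1367]; [:: 794; 1368; 1367; 1369; 790]; [:: 795; 1296; 1283; 791; 1370]; [:: 1367; 799; 794; 1074; 792]; [:: 1371; 794; 801; 1372; 1025]; [:: 1369; 1372; 1074; 794; 987]; [:: 1370; 803; 1073; 1071; 795]; [:: 799; 1358; 797; 1078; 796]; [:: 1373; 797; 1357; 1374; 1352]; [:: 802; 1374; 1078; 797; 1009]; [:: 803; 1375; 1077; 1075; 798]; [:: 801; 1373; 1371; 1376; 1377]; [:: 1376; 802; 1372; 801; 1378]; [:: 1377; 806; 1025; 1238; 801]; [:: 805; 832; 804; 826; 1379]; [:: 806; 1380; 1379; 1239; 804]; [:: 1379; 1024; 806; 1240; 805]; [:: 1160; 807; 942; 1381; 941]; [:: 824; 1381; 1241; 807; 1280]; [:: 995; 940; 809; 1382; 808]; [:: 1032; 1242; 1382; 809; 1383]; [:: 1384; 810; 948; 1385; 947]; [:: 839; 1385; 1092; 810; 944]; [:: 1170; 812; 951; 811; 1248]; [:: 842; 1386; 1090; 943; 812]; [::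 1153; 815; 813; 1104; 945]; [:: 1154; 947; 945; 1250; 813]; [:: 815; 1149; 814; 1320; 1387]; [:: 816; 1388; 1387; 1389; 814]; [:: 1387; 943; 816; 1386; 815]; [:: 1389; 1245; 1386; 816; 1390]; [:: 1006; 1322; 819; 1103; 817]; [:: 1007; 944; 820; 818; 1102]; [:: 1391; 819; 1287; 1392; 1286]; [:: 1044; 1392; 1103; 819; 1100]; [:: 1046; 1390; 1102; 1099; 820]; [:: 1363; 1028; 821; 1093; 1284]; [:: 1364; 1286; 1284; 1251; 821]; [:: 1393; 822; 959; 1394; 957]; [:: 1152; 1394; 1110; 822; 954]; [:: 823; 1160; 904; 1395; 902]; [:: 1395; 824; 962; 823; 1260]; [:: 1280; 1396; 1107; 953; 824]; [:: 843; 829; 825; 1126; 955]; [:: 844; 957; 955; 1262; 825]; [:: 938; 960; 937; 827; 1397]; [:: 829; 848; 828; 1398; 1399]; [:: 830; 837; 1398; 828; 1400]; [:: 831; 1401; 1399; 1402; 828]; [:: 1398; 1126; 830; 829; 1403]; [:: 1399; 953; 831; 1396; 829]; [:: 1400; 1404; 1403; 1405; 830]; [:: 1402; 1257; 1396; 831; 1406]; [:: 1336; 1403; 834; 1125; 832]; [:: 1337; 954; 835; 833; 1124]; [:: 1407; 834; 1404; 1408; 1409]; [:: 1339; 1408; 1125; 834; 1122]; [:: 1340; 1406; 1124; 1121; 835]; [:: 860; 1117; 836; 1111; 1410]; [:: 861; 1409; 1410; 1263; 836]; [:: 838; 1384; 968; 1411; 966]; [:: 1411; 839; 971; 838; 1271];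 [:: 841; 1170; 917; 840; 1216]; [:: 1412; 842; 854; 852; 1142]; [:: 1024; 1147; 846; 1134; 845]; [:: 1413; 846; 1146; 1264; 1141]; [:: 1026; 1276; 965; 1132; 847]; [:: 851; 1398; 849; 848; 1414]; [:: 852; 1387; 850; 1412; 848]; [:: 853; 1415; 1414; 1416; 849]; [:: 1267; 850; 1388; 1417; 1418]; [:: 854; 1417; 1412; 850; 1419]; [:: 1414; 855; 853; 1143; 851]; [:: 1420; 853; 857; 1421; 1133]; [:: 1416; 1421; 1143; 853; 1131]; [:: 1419; 859; 1142; 1140; 854]; [:: 857; 1355; 1420; 1422; 1423]; [:: 1422; 858; 1421; 857; 1424]; [:: 1423; 861; 1133; 1275; 857]; [:: 1410; 1132; 861; 1276; 860]; [:: 1036; 862; 1425; 1034; 1426]; [:: 866; 1095; 863; 1359; 1427]; [:: 867; 1418; 1427; 1428; 863]; [:: 1429; 864; 983; 1430; 982]; [:: 1107; 1430; 1280; 864; 1241]; [:: 1093; 866; 865; 1363; 981]; [:: 1094; 982; 981; 1431; 865]; [:: 1427; 980; 867; 1432; 866]; [:: 1428; 1281; 1432; 867; 1433]; [:: 1434; 868; 1435; 991; 1436]; [:: 869; 1434; 1181; 993; 1168]; [:: 1182; 871; 897; 870; 1437]; [:: 1085; 1108; 898; 1438; 870]; [:: 875; 1439; 872; 1167; 871]; [:: 1440; 872; 1441; 1442; 1443]; [:: 877; 1442; 1167; 872; 988]; [:: 1000; 926; 873; 1444; 1190]; [:: 1001; 874; 1444; 873; 1445]; [:: 1002; 904; 1190;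 1446; 873]; [:: 878; 1447; 1163; 1161; 874]; [:: 876; 1440; 888; 1313; 1158]; [:: 1246; 1211; 907; 1204; 879]; [:: 1091; 1130; 909; 880; 1202]; [:: 1439; 881; 1206; 1179; 1205]; [:: 882; 888; 1448; 1449; 1450]; [:: 1448; 1206; 882; 1451; 1201]; [:: 1449; 883; 1451; 882; 1452]; [:: 1450; 914; 1201; 1453; 882]; [:: 1014; 932; 885; 884; 1454]; [:: 1015; 1455; 1454; 1456; 885]; [:: 1016; 917; 1203; 886; 1457]; [:: 1447; 887; 1458; 1171; 1459]; [:: 889; 1449; 1313; 888; 1300]; [:: 890; 1460; 1158; 1019; 888]; [:: 1159; 891; 921; 941; 1461]; [:: 893; 1462; 892; 1022; 891]; [:: 1460; 892; 1463; 1023; 1464]; [:: 1465; 894; 1238; 1025; 1229]; [:: 895; 896; 1466; 946; 1467]; [:: 1466; 1250; 895; 947; 1468]; [:: 1467; 1436; 1468; 1469; 895]; [:: 1221; 1470; 1437; 1471; 897]; [:: 1031; 898; 1166; 1472; 1164]; [:: 1242; 1472; 1438; 898; 1473]; [:: 910; 899; 1474; 1200; 1475]; [:: 900; 906; 1476; 1277; 1477]; [:: 1476; 1474; 900; 1478; 1479]; [:: 1277; 901; 1478; 900; 1480]; [:: 1477; 1443; 1479; 1481; 900]; [:: 960; 1225; 903; 902; 1482]; [:: 961; 1483; 1482; 1484; 903]; [:: 962; 1446; 1395; 904; 1485]; [:: 918; 905; 1486; 1192; 1487]; [:: 1488; 907; 1175; 1489; 1173]; [:: 1248; 1489; 1204;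 907; 1170]; [:: 1045; 909; 1178; 908; 1456]; [:: 1249; 1490; 1202; 1169; 909]; [:: 1474; 912; 910; 1218; 1171]; [:: 1475; 1173; 1171; 1458; 910]; [:: 912; 1476; 911; 1491; 1492]; [:: 913; 919; 1491; 911; 1493]; [:: 914; 1494; 1492; 1495; 911]; [:: 1491; 1218; 913; 912; 1496]; [:: 1492; 1169; 914; 1490; 912]; [:: 1493; 1497; 1496; 1498; 913]; [:: 1495; 1453; 1490; 914; 1499]; [:: 972; 1496; 916; 1217; 915]; [:: 1500; 916; 1497; 1501; 1502]; [:: 974; 1501; 1217; 916; 1130]; [:: 975; 1499; 1216; 1214; 917]; [:: 1486; 1210; 918; 1205; 1503]; [:: 1487; 1502; 1503; 1459; 918]; [:: 923; 920; 1504; 979; 1505]; [:: 1189; 1506; 1461; 1507; 921]; [:: 952; 922; 1431; 981; 1508]; [:: 1504; 1431; 923; 982; 1509]; [:: 1505; 1464; 1509; 1510; 923]; [:: 927; 1197; 925; 924; 1511]; [:: 928; 1512; 1511; 1513; 925]; [:: 929; 1444; 1282; 926; 1514]; [:: 1511; 933; 928; 1231; 927]; [:: 1515; 928; 934; 1378; 1185]; [:: 1513; 1378; 1231; 928; 985]; [:: 1514; 936; 1230; 1228; 929]; [:: 933; 1503; 931; 1235; 930]; [:: 1516; 931; 1502; 1517; 1497]; [:: 935; 1517; 1235; 931; 986]; [:: 936; 1518; 1234; 1232; 932]; [:: 934; 1516; 1515; 1519; 1520]; [:: 1519; 935; 1378; 934; 1372]; [:: 1520; 939; 1185; 1081; 934];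 [:: 939; 1521; 1397; 1083; 937]; [:: 1397; 1026; 939; 1084; 938]; [:: 954; 1382; 1086; 940; 1152]; [:: 1191; 1088; 1381; 942; 1522]; [:: 947; 1278; 946; 1466; 1384]; [:: 948; 1523; 1384; 1524; 946]; [:: 1524; 1098; 1385; 948; 1525]; [:: 1169; 1468; 950; 1249; 949]; [:: 1526; 950; 1436; 1527; 1435]; [:: 1202; 1527; 1249; 950; 1091]; [:: 1204; 1525; 1248; 1246; 951]; [:: 1431; 1187; 952; 1094; 1288]; [:: 1508; 1435; 1288; 1105; 952]; [:: 957; 966; 956; 1528; 1393]; [:: 958; 964; 1528; 956; 1529]; [:: 959; 1530; 1393; 1531; 956]; [:: 1528; 1262; 958; 957; 1532]; [:: 1529; 1533; 1532; 1534; 958]; [:: 1531; 1120; 1394; 959; 1535]; [:: 1482; 1532; 961; 1261; 960]; [:: 1536; 961; 1533; 1537; 1538]; [:: 1484; 1537; 1261; 961; 1109]; [:: 1485; 1535; 1260; 1258; 962]; [:: 976; 1255; 963; 1112; 1539]; [:: 977; 1538; 1539; 1127; 963]; [:: 1540; 965; 1275; 1133; 1270]; [:: 969; 1528; 967; 966; 1541]; [:: 970; 1542; 1541; 1543; 967]; [:: 1138; 968; 1523; 1544; 1545]; [:: 971; 1544; 1411; 968; 1546]; [:: 1541; 972; 970; 1272; 969]; [:: 1547; 970; 973; 1424; 1264]; [:: 1543; 1424; 1272; 970; 1129]; [:: 1546; 975; 1271; 1269; 971]; [:: 973; 1500; 1547; 1548; 1549]; [:: 1548; 974; 1424; 973;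 1421]; [:: 1549; 977; 1264; 1146; 973]; [:: 1539; 1134; 977; 1147; 976]; [:: 1195; 978; 1550; 1193; 1551]; [:: 982; 1243; 979; 1504; 1429]; [:: 983; 1545; 1429; 1552; 979]; [:: 1110; 1432; 1152; 980; 1086]; [:: 1552; 1156; 1430; 983; 1553]; [:: 985; 988; 1227; 984; 1513]; [:: 987; 989; 1070; 997; 1369]; [:: 1316; 990; 1105; 1288; 1104]; [:: 991; 993; 1554; 1434; 1555]; [:: 1554; 1105; 991; 1435; 1101]; [:: 1555; 1029; 1101; 1556; 991]; [:: 1462; 992; 1251; 1284; 1250]; [:: 1315; 1333; 1030; 1327; 994]; [:: 1382; 1337; 1032; 995; 1325]; [:: 1008; 996; 1329; 1299; 1328]; [:: 998; 1004; 1557; 1558; 1559]; [:: 1557; 1329; 998; 1560; 1324]; [:: 1558; 999; 1560; 998; 1561]; [:: 1559; 1037; 1324; 1562; 998]; [:: 1444; 1070; 1001; 1000; 1563]; [:: 1445; 1564; 1563; 1565; 1001]; [:: 1446; 1041; 1326; 1002; 1566]; [:: 1017; 1003; 1567; 1291; 1568]; [:: 1005; 1558; 1018; 1004; 1180]; [:: 1011; 1557; 1010; 1569; 1343]; [:: 1012; 1018; 1569; 1010; 1570]; [:: 1013; 1571; 1343; 1572; 1010]; [:: 1569; 1311; 1012; 1011; 1573]; [:: 1570; 1574; 1573; 1575; 1012]; [:: 1572; 1055; 1344; 1013; 1576]; [:: 1454; 1573; 1015; 1310; 1014]; [:: 1577; 1015; 1574; 1578; 1579]; [:: 1456; 1578;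 1310; 1015; 1045]; [:: 1457; 1576; 1309; 1307; 1016]; [:: 1567; 1304; 1017; 1048; 1375]; [:: 1568; 1579; 1375; 1062; 1017]; [:: 1020; 1580; 1180; 1168; 1018]; [:: 1023; 1019; 1581; 1460; 1582]; [:: 1289; 1365; 1064; 1383; 1021]; [:: 1284; 1022; 1364; 1462; 1363]; [:: 1581; 1364; 1023; 1463; 1361]; [:: 1582; 1067; 1361; 1583; 1023]; [:: 1025; 1413; 1377; 1465; 1371]; [:: 1028; 1359; 1027; 1095; 1584]; [:: 1029; 1585; 1584; 1586; 1027]; [:: 1584; 1099; 1029; 1390; 1028]; [:: 1586; 1556; 1390; 1029; 1386]; [:: 1587; 1030; 1295; 1588; 1293]; [:: 1362; 1588; 1327; 1030; 1290]; [:: 1472; 1032; 1298; 1031; 1565]; [:: 1383; 1589; 1325; 1289; 1032]; [:: 1047; 1035; 1033; 1341; 1291]; [:: 1048; 1293; 1291; 1567; 1033]; [:: 1035; 1049; 1034; 1425; 1590]; [:: 1037; 1591; 1590; 1592; 1034]; [:: 1425; 1341; 1036; 1035; 1593]; [:: 1590; 1289; 1037; 1589; 1035]; [:: 1426; 1594; 1593; 1595; 1036]; [:: 1592; 1562; 1589; 1037; 1596]; [:: 1121; 1593; 1040; 1340; 1038]; [:: 1122; 1290; 1041; 1039; 1339]; [:: 1597; 1040; 1594; 1598; 1599]; [:: 1124; 1598; 1340; 1040; 1337]; [:: 1125; 1596; 1339; 1336; 1041]; [:: 1061; 1332; 1042; 1328; 1600]; [:: 1062; 1599; 1600; 1568;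 1042]; [:: 1043; 1391; 1303; 1601; 1301]; [:: 1601; 1044; 1306; 1043; 1575]; [:: 1602; 1046; 1055; 1053; 1353]; [:: 1052; 1425; 1050; 1049; 1603]; [:: 1053; 1584; 1051; 1602; 1049]; [:: 1054; 1604; 1603; 1605; 1050]; [:: 1571; 1051; 1585; 1606; 1607]; [:: 1055; 1606; 1602; 1051; 1608]; [:: 1603; 1056; 1054; 1354; 1052]; [:: 1609; 1054; 1058; 1610; 1076]; [:: 1605; 1610; 1354; 1054; 1345]; [:: 1608; 1060; 1353; 1351; 1055]; [:: 1058; 1144; 1609; 1611; 1612]; [:: 1611; 1059; 1610; 1058; 1613]; [:: 1612; 1062; 1076; 1579; 1058]; [:: 1600; 1075; 1062; 1375; 1061]; [:: 1066; 1320; 1063; 1149; 1614]; [:: 1067; 1607; 1614; 1615; 1063]; [:: 1616; 1064; 1318; 1617; 1317]; [:: 1325; 1617; 1383; 1064; 1382]; [:: 1104; 1066; 1065; 1153; 1316]; [:: 1105; 1317; 1316; 1508; 1065]; [:: 1614; 1315; 1067; 1433; 1066]; [:: 1615; 1583; 1433; 1067; 1432]; [:: 1071; 1600; 1069; 1370; 1068]; [:: 1618; 1069; 1599; 1619; 1594]; [:: 1073; 1619; 1370; 1069; 1283]; [:: 1074; 1620; 1369; 1367; 1070]; [:: 1072; 1618; 1079; 1621; 1319]; [:: 1621; 1073; 1080; 1072; 1237]; [:: 1076; 1079; 1612; 1622; 1609]; [:: 1622; 1077; 1579; 1076; 1574]; [:: 1620; 1078; 1312; 1358; 1311]; [:: 1080;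 1622; 1621; 1079; 1623]; [:: 1081; 1624; 1319; 1520; 1079]; [:: 1623; 1230; 1237; 1229; 1080]; [:: 1084; 1410; 1083; 1397; 1082]; [:: 1624; 1083; 1409; 1521; 1404]; [:: 1438; 1086; 1242; 1085; 1507]; [:: 1290; 1241; 1088; 1087; 1362]; [:: 1327; 1433; 1362; 1315; 1088]; [:: 1089; 1128; 1244; 1625; 1243]; [:: 1625; 1090; 1245; 1089; 1469]; [:: 1626; 1092; 1098; 1097; 1323]; [:: 1097; 1136; 1096; 1626; 1095]; [:: 1523; 1096; 1138; 1627; 1401]; [:: 1098; 1627; 1626; 1096; 1628]; [:: 1628; 1103; 1323; 1322; 1098]; [:: 1101; 1343; 1555; 1629; 1554]; [:: 1629; 1102; 1556; 1101; 1630]; [:: 1106; 1429; 1254; 1631; 1252]; [:: 1631; 1107; 1257; 1106; 1534]; [:: 1109; 1438; 1199; 1108; 1484]; [:: 1632; 1110; 1120; 1118; 1405]; [:: 1240; 1539; 1239; 1379; 1113]; [:: 1117; 1135; 1115; 1114; 1633]; [:: 1118; 1427; 1116; 1632; 1114]; [:: 1119; 1634; 1633; 1635; 1115]; [:: 1530; 1116; 1418; 1636; 1388]; [:: 1120; 1636; 1632; 1116; 1637]; [:: 1633; 1121; 1119; 1406; 1117]; [:: 1638; 1119; 1123; 1639; 1380]; [:: 1635; 1639; 1406; 1119; 1396]; [:: 1637; 1125; 1405; 1403; 1120]; [:: 1123; 1597; 1638; 1640; 1641]; [:: 1640; 1124; 1639; 1123; 1642]; [:: 1641; 1127; 1380;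 1538; 1123]; [:: 1147; 1379; 1127; 1539; 1126]; [:: 1129; 1625; 1268; 1128; 1543]; [:: 1131; 1626; 1139; 1136; 1416]; [:: 1133; 1319; 1423; 1540; 1420]; [:: 1140; 1603; 1137; 1419; 1135]; [:: 1643; 1137; 1604; 1644; 1645]; [:: 1142; 1644; 1419; 1137; 1412]; [:: 1544; 1139; 1627; 1138; 1646]; [:: 1545; 1150; 1401; 1647; 1138]; [:: 1143; 1608; 1416; 1414; 1139]; [:: 1141; 1643; 1144; 1648; 1413]; [:: 1648; 1142; 1145; 1141; 1274]; [:: 1145; 1611; 1648; 1144; 1649]; [:: 1146; 1641; 1413; 1549; 1144]; [:: 1649; 1271; 1274; 1270; 1145]; [:: 1332; 1346; 1148; 1330; 1650]; [:: 1334; 1645; 1650; 1651; 1148]; [:: 1155; 1399; 1150; 1652; 1149]; [:: 1156; 1647; 1652; 1150; 1653]; [:: 1151; 1393; 1279; 1654; 1278]; [:: 1654; 1152; 1281; 1151; 1510]; [:: 1250; 1223; 1222; 1154; 1462]; [:: 1652; 1280; 1156; 1155; 1366]; [:: 1653; 1383; 1366; 1365; 1156]; [:: 1157; 1158; 1655; 1285; 1656]; [:: 1655; 1251; 1157; 1286; 1247]; [:: 1656; 1188; 1247; 1630; 1157]; [:: 1461; 1479; 1189; 1473; 1159]; [:: 1381; 1395; 1191; 1160; 1471]; [:: 1171; 1161; 1475; 1447; 1474]; [:: 1162; 1168; 1657; 1580; 1658]; [:: 1657; 1475; 1162; 1659; 1470]; [:: 1580; 1163; 1659; 1162; 1660];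 [:: 1658; 1196; 1470; 1661; 1162]; [:: 1296; 1227; 1165; 1164; 1662]; [:: 1297; 1663; 1662; 1664; 1165]; [:: 1298; 1199; 1472; 1166; 1665]; [:: 1179; 1167; 1666; 1439; 1667]; [:: 1173; 1657; 1172; 1668; 1488]; [:: 1174; 1180; 1668; 1172; 1669]; [:: 1175; 1670; 1488; 1671; 1172]; [:: 1668; 1458; 1174; 1173; 1672]; [:: 1669; 1673; 1672; 1674; 1174]; [:: 1671; 1213; 1489; 1175; 1675]; [:: 1307; 1672; 1177; 1457; 1176]; [:: 1676; 1177; 1673; 1677; 1678]; [:: 1309; 1677; 1457; 1177; 1203]; [:: 1310; 1675; 1456; 1454; 1178]; [:: 1666; 1451; 1179; 1206; 1518]; [:: 1667; 1678; 1518; 1219; 1179]; [:: 1184; 1181; 1679; 1314; 1680]; [:: 1437; 1509; 1221; 1522; 1182]; [:: 1288; 1183; 1508; 1316; 1431]; [:: 1679; 1508; 1184; 1317; 1506]; [:: 1680; 1224; 1506; 1681; 1184]; [:: 1185; 1540; 1520; 1319; 1515]; [:: 1187; 1504; 1186; 1243; 1682]; [:: 1188; 1683; 1682; 1684; 1186]; [:: 1682; 1246; 1188; 1525; 1187]; [:: 1684; 1630; 1525; 1188; 1385]; [:: 1685; 1189; 1443; 1686; 1441]; [:: 1507; 1686; 1473; 1189; 1438]; [:: 1326; 1191; 1446; 1190; 1664]; [:: 1522; 1687; 1471; 1437; 1191]; [:: 1205; 1194; 1192; 1486; 1439]; [:: 1206; 1441; 1439; 1666; 1192]; [:: 1194;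 1207; 1193; 1550; 1688]; [:: 1196; 1689; 1688; 1690; 1193]; [:: 1550; 1486; 1195; 1194; 1691]; [:: 1688; 1437; 1196; 1687; 1194]; [:: 1551; 1692; 1691; 1693; 1195]; [:: 1690; 1661; 1687; 1196; 1694]; [:: 1258; 1691; 1198; 1485; 1197]; [:: 1695; 1198; 1692; 1696; 1697]; [:: 1260; 1696; 1485; 1198; 1395]; [:: 1261; 1694; 1484; 1482; 1199]; [:: 1218; 1478; 1200; 1474; 1698]; [:: 1219; 1697; 1698; 1667; 1200]; [:: 1201; 1526; 1450; 1699; 1448]; [:: 1699; 1202; 1453; 1201; 1674]; [:: 1700; 1204; 1213; 1211; 1498]; [:: 1210; 1550; 1208; 1207; 1701]; [:: 1211; 1682; 1209; 1700; 1207]; [:: 1212; 1702; 1701; 1703; 1208]; [:: 1670; 1209; 1683; 1704; 1705]; [:: 1213; 1704; 1700; 1209; 1706]; [:: 1701; 1214; 1212; 1499; 1210]; [:: 1707; 1212; 1215; 1708; 1233]; [:: 1703; 1708; 1499; 1212; 1490]; [:: 1706; 1217; 1498; 1496; 1213]; [:: 1215; 1273; 1707; 1709; 1710]; [:: 1709; 1216; 1708; 1215; 1711]; [:: 1710; 1219; 1233; 1678; 1215]; [:: 1698; 1232; 1219; 1518; 1218]; [:: 1223; 1466; 1220; 1278; 1712]; [:: 1224; 1705; 1712; 1713; 1220]; [:: 1714; 1221; 1464; 1715; 1463]; [:: 1471; 1715; 1522; 1221; 1381]; [:: 1251; 1463; 1462; 1364; 1222]; [:: 1712; 1461; 1224;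 1553; 1223]; [:: 1713; 1681; 1553; 1224; 1430]; [:: 1228; 1698; 1226; 1514; 1225]; [:: 1716; 1226; 1697; 1717; 1692]; [:: 1230; 1717; 1514; 1226; 1282]; [:: 1231; 1718; 1513; 1511; 1227]; [:: 1229; 1716; 1236; 1623; 1465]; [:: 1233; 1236; 1710; 1719; 1707]; [:: 1719; 1234; 1678; 1233; 1673]; [:: 1718; 1235; 1459; 1503; 1458]; [:: 1237; 1719; 1623; 1236; 1621]; [:: 1238; 1720; 1465; 1377; 1236]; [:: 1720; 1239; 1538; 1380; 1533]; [:: 1473; 1553; 1507; 1461; 1242]; [:: 1388; 1244; 1267; 1721; 1530]; [:: 1245; 1721; 1625; 1244; 1722]; [:: 1722; 1249; 1469; 1468; 1245]; [:: 1247; 1488; 1656; 1723; 1655]; [:: 1723; 1248; 1630; 1247; 1556]; [:: 1255; 1265; 1253; 1252; 1724]; [:: 1256; 1725; 1724; 1726; 1253]; [:: 1401; 1254; 1545; 1727; 1523]; [:: 1257; 1727; 1631; 1254; 1728]; [:: 1724; 1258; 1256; 1535; 1255]; [:: 1729; 1256; 1259; 1642; 1521]; [:: 1726; 1642; 1535; 1256; 1394]; [:: 1728; 1261; 1534; 1532; 1257]; [:: 1259; 1695; 1729; 1730; 1731]; [:: 1730; 1260; 1642; 1259; 1639]; [:: 1731; 1263; 1521; 1409; 1259]; [:: 1276; 1397; 1263; 1410; 1262]; [:: 1264; 1465; 1549; 1413; 1547]; [:: 1269; 1701; 1266; 1546; 1265]; [:: 1732; 1266; 1702; 1733; 1734];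 [:: 1271; 1733; 1546; 1266; 1411]; [:: 1417; 1268; 1721; 1267; 1735]; [:: 1418; 1279; 1530; 1736; 1267]; [:: 1272; 1706; 1543; 1541; 1268]; [:: 1270; 1732; 1273; 1649; 1540]; [:: 1274; 1709; 1649; 1273; 1648]; [:: 1275; 1731; 1540; 1423; 1273]; [:: 1478; 1491; 1277; 1476; 1737]; [:: 1480; 1734; 1737; 1738; 1277]; [:: 1281; 1736; 1654; 1279; 1739]; [:: 1739; 1522; 1510; 1509; 1281]; [:: 1286; 1581; 1285; 1655; 1391]; [:: 1287; 1740; 1391; 1741; 1285]; [:: 1741; 1323; 1392; 1287; 1527]; [:: 1293; 1301; 1292; 1742; 1587]; [:: 1294; 1300; 1742; 1292; 1743]; [:: 1295; 1744; 1587; 1745; 1292]; [:: 1742; 1567; 1294; 1293; 1746]; [:: 1743; 1747; 1746; 1748; 1294]; [:: 1745; 1335; 1588; 1295; 1749]; [:: 1662; 1746; 1297; 1566; 1296]; [:: 1750; 1297; 1747; 1751; 1752]; [:: 1664; 1751; 1566; 1297; 1326]; [:: 1665; 1749; 1565; 1563; 1298]; [:: 1311; 1560; 1299; 1329; 1620]; [:: 1312; 1752; 1620; 1342; 1299]; [:: 1304; 1742; 1302; 1301; 1753]; [:: 1305; 1754; 1753; 1755; 1302]; [:: 1349; 1303; 1740; 1756; 1757]; [:: 1306; 1756; 1601; 1303; 1758]; [:: 1753; 1307; 1305; 1576; 1304]; [:: 1759; 1305; 1308; 1613; 1374]; [:: 1755; 1613; 1576; 1305; 1344]; [:: 1758;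 1310; 1575; 1573; 1306]; [:: 1308; 1676; 1759; 1760; 1761]; [:: 1760; 1309; 1613; 1308; 1610]; [:: 1761; 1312; 1374; 1357; 1308]; [:: 1442; 1313; 1762; 1440; 1763]; [:: 1317; 1554; 1314; 1679; 1616]; [:: 1318; 1757; 1616; 1764; 1314]; [:: 1764; 1366; 1617; 1318; 1715]; [:: 1322; 1347; 1321; 1628; 1320]; [:: 1740; 1321; 1349; 1765; 1591]; [:: 1323; 1765; 1628; 1321; 1626]; [:: 1324; 1616; 1559; 1766; 1557]; [:: 1766; 1325; 1562; 1324; 1748]; [:: 1767; 1327; 1335; 1333; 1595]; [:: 1333; 1614; 1331; 1767; 1330]; [:: 1744; 1331; 1607; 1768; 1585]; [:: 1335; 1768; 1767; 1331; 1769]; [:: 1650; 1336; 1334; 1596; 1332]; [:: 1770; 1334; 1338; 1771; 1368]; [:: 1651; 1771; 1596; 1334; 1589]; [:: 1769; 1340; 1595; 1593; 1335]; [:: 1338; 1407; 1770; 1772; 1773]; [:: 1772; 1339; 1771; 1338; 1774]; [:: 1773; 1342; 1368; 1752; 1338]; [:: 1358; 1367; 1342; 1620; 1341]; [:: 1344; 1629; 1572; 1343; 1755]; [:: 1345; 1628; 1350; 1347; 1605]; [:: 1351; 1414; 1348; 1608; 1346]; [:: 1775; 1348; 1415; 1776; 1634]; [:: 1353; 1776; 1608; 1348; 1602]; [:: 1756; 1350; 1765; 1349; 1777]; [:: 1757; 1360; 1591; 1778; 1349]; [:: 1354; 1419; 1605; 1603; 1350]; [:: 1352; 1775; 1355;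 1779; 1373]; [:: 1779; 1353; 1356; 1352; 1578]; [:: 1356; 1422; 1779; 1355; 1780]; [:: 1357; 1773; 1373; 1761; 1355]; [:: 1780; 1575; 1578; 1574; 1356]; [:: 1365; 1590; 1360; 1653; 1359]; [:: 1366; 1778; 1653; 1360; 1652]; [:: 1361; 1587; 1582; 1781; 1581]; [:: 1781; 1362; 1583; 1361; 1681]; [:: 1368; 1371; 1773; 1782; 1770]; [:: 1782; 1369; 1752; 1368; 1747]; [:: 1375; 1370; 1568; 1600; 1567]; [:: 1372; 1782; 1376; 1371; 1519]; [:: 1374; 1376; 1761; 1373; 1759]; [:: 1378; 1783; 1519; 1515; 1376]; [:: 1380; 1377; 1641; 1720; 1638]; [:: 1385; 1411; 1524; 1384; 1684]; [:: 1386; 1412; 1389; 1387; 1586]; [:: 1721; 1389; 1417; 1388; 1784]; [:: 1390; 1602; 1586; 1584; 1389]; [:: 1392; 1601; 1741; 1391; 1785]; [:: 1785; 1469; 1527; 1436; 1392]; [:: 1394; 1654; 1531; 1393; 1726]; [:: 1396; 1652; 1402; 1399; 1635]; [:: 1403; 1650; 1400; 1637; 1398]; [:: 1786; 1400; 1645; 1787; 1604]; [:: 1405; 1787; 1637; 1400; 1632]; [:: 1727; 1402; 1647; 1401; 1788]; [:: 1406; 1769; 1635; 1633; 1402]; [:: 1404; 1786; 1407; 1789; 1624]; [:: 1789; 1405; 1408; 1404; 1537]; [:: 1408; 1772; 1789; 1407; 1790]; [:: 1409; 1423; 1624; 1731; 1407]; [:: 1790; 1534; 1537; 1533; 1408];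 [:: 1415; 1420; 1775; 1791; 1792]; [:: 1791; 1416; 1776; 1415; 1793]; [:: 1792; 1426; 1634; 1794; 1415]; [:: 1735; 1777; 1784; 1788; 1417]; [:: 1736; 1428; 1636; 1418; 1795]; [:: 1421; 1791; 1422; 1420; 1548]; [:: 1424; 1796; 1548; 1547; 1422]; [:: 1593; 1633; 1426; 1769; 1425]; [:: 1595; 1794; 1769; 1426; 1767]; [:: 1432; 1632; 1428; 1427; 1615]; [:: 1433; 1767; 1615; 1614; 1428]; [:: 1430; 1631; 1552; 1429; 1713]; [:: 1435; 1679; 1434; 1554; 1526]; [:: 1436; 1797; 1526; 1785; 1434]; [:: 1441; 1448; 1440; 1762; 1685]; [:: 1443; 1798; 1685; 1799; 1440]; [:: 1762; 1666; 1442; 1441; 1800]; [:: 1763; 1801; 1800; 1802; 1442]; [:: 1799; 1481; 1686; 1443; 1803]; [:: 1563; 1800; 1445; 1665; 1444]; [:: 1804; 1445; 1801; 1805; 1806]; [:: 1565; 1805; 1665; 1445; 1472]; [:: 1566; 1803; 1664; 1662; 1446]; [:: 1458; 1659; 1447; 1475; 1718]; [:: 1459; 1806; 1718; 1487; 1447]; [:: 1451; 1762; 1449; 1448; 1807]; [:: 1452; 1808; 1807; 1809; 1449]; [:: 1494; 1450; 1797; 1810; 1811]; [:: 1453; 1810; 1699; 1450; 1812]; [:: 1807; 1454; 1452; 1675; 1451]; [:: 1813; 1452; 1455; 1711; 1517]; [:: 1809; 1711; 1675; 1452; 1489]; [:: 1812; 1457; 1674; 1672; 1453]; [:: 1455;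 1577; 1813; 1814; 1815]; [:: 1814; 1456; 1711; 1455; 1708]; [:: 1815; 1459; 1517; 1502; 1455]; [:: 1463; 1655; 1460; 1581; 1714]; [:: 1464; 1811; 1714; 1816; 1460]; [:: 1816; 1510; 1715; 1464; 1617]; [:: 1468; 1492; 1467; 1722; 1466]; [:: 1797; 1467; 1494; 1817; 1689]; [:: 1469; 1817; 1722; 1467; 1625]; [:: 1470; 1714; 1658; 1818; 1657]; [:: 1818; 1471; 1661; 1470; 1802]; [:: 1819; 1473; 1481; 1479; 1693]; [:: 1479; 1712; 1477; 1819; 1476]; [:: 1798; 1477; 1705; 1820; 1683]; [:: 1481; 1820; 1819; 1477; 1821]; [:: 1737; 1482; 1480; 1694; 1478]; [:: 1822; 1480; 1483; 1823; 1512]; [:: 1738; 1823; 1694; 1480; 1687]; [:: 1821; 1485; 1693; 1691; 1481]; [:: 1483; 1536; 1822; 1824; 1825]; [:: 1824; 1484; 1823; 1483; 1826]; [:: 1825; 1487; 1512; 1806; 1483]; [:: 1503; 1511; 1487; 1718; 1486]; [:: 1489; 1723; 1671; 1488; 1809]; [:: 1490; 1722; 1495; 1492; 1703]; [:: 1496; 1541; 1493; 1706; 1491]; [:: 1827; 1493; 1542; 1828; 1725]; [:: 1498; 1828; 1706; 1493; 1700]; [:: 1810; 1495; 1817; 1494; 1829]; [:: 1811; 1505; 1689; 1830; 1494]; [:: 1499; 1546; 1703; 1701; 1495]; [:: 1497; 1827; 1500; 1831; 1516]; [:: 1831; 1498; 1501; 1497; 1677]; [:: 1501; 1548; 1831;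 1500; 1832]; [:: 1502; 1825; 1516; 1815; 1500]; [:: 1832; 1674; 1677; 1673; 1501]; [:: 1509; 1688; 1505; 1739; 1504]; [:: 1510; 1830; 1739; 1505; 1654]; [:: 1506; 1685; 1680; 1833; 1679]; [:: 1833; 1507; 1681; 1506; 1583]; [:: 1512; 1515; 1825; 1783; 1822]; [:: 1783; 1513; 1806; 1512; 1801]; [:: 1518; 1514; 1667; 1698; 1666]; [:: 1517; 1519; 1815; 1516; 1813]; [:: 1521; 1520; 1731; 1624; 1729]; [:: 1627; 1524; 1544; 1523; 1834]; [:: 1525; 1700; 1684; 1682; 1524]; [:: 1527; 1699; 1785; 1526; 1741]; [:: 1532; 1737; 1529; 1728; 1528]; [:: 1835; 1529; 1734; 1836; 1702]; [:: 1534; 1836; 1728; 1529; 1631]; [:: 1636; 1531; 1736; 1530; 1837]; [:: 1535; 1821; 1726; 1724; 1531]; [:: 1533; 1835; 1536; 1790; 1720]; [:: 1537; 1824; 1790; 1536; 1789]; [:: 1538; 1549; 1720; 1641; 1536]; [:: 1542; 1547; 1827; 1796; 1838]; [:: 1796; 1543; 1828; 1542; 1839]; [:: 1838; 1551; 1725; 1840; 1542]; [:: 1646; 1829; 1834; 1837; 1544]; [:: 1647; 1552; 1727; 1545; 1841]; [:: 1691; 1724; 1551; 1821; 1550]; [:: 1693; 1840; 1821; 1551; 1819]; [:: 1553; 1819; 1713; 1712; 1552]; [:: 1585; 1555; 1571; 1842; 1744]; [:: 1556; 1842; 1629; 1555; 1723]; [:: 1560; 1569; 1558; 1557; 1843];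 [:: 1561; 1844; 1843; 1845; 1558]; [:: 1591; 1559; 1757; 1846; 1740]; [:: 1562; 1846; 1766; 1559; 1847]; [:: 1843; 1563; 1561; 1749; 1560]; [:: 1848; 1561; 1564; 1774; 1619]; [:: 1845; 1774; 1749; 1561; 1588]; [:: 1847; 1566; 1748; 1746; 1562]; [:: 1564; 1804; 1848; 1849; 1850]; [:: 1849; 1565; 1774; 1564; 1771]; [:: 1850; 1568; 1619; 1599; 1564]; [:: 1573; 1807; 1570; 1758; 1569]; [:: 1851; 1570; 1808; 1852; 1853]; [:: 1575; 1852; 1758; 1570; 1601]; [:: 1606; 1572; 1842; 1571; 1854]; [:: 1607; 1582; 1744; 1855; 1571]; [:: 1576; 1812; 1755; 1753; 1572]; [:: 1574; 1851; 1577; 1780; 1622]; [:: 1578; 1814; 1780; 1577; 1779]; [:: 1579; 1850; 1622; 1612; 1577]; [:: 1659; 1668; 1580; 1657; 1856]; [:: 1660; 1853; 1856; 1857; 1580]; [:: 1583; 1855; 1781; 1582; 1833]; [:: 1842; 1586; 1606; 1585; 1858]; [:: 1588; 1781; 1745; 1587; 1845]; [:: 1589; 1653; 1592; 1590; 1651]; [:: 1846; 1592; 1778; 1591; 1859]; [:: 1596; 1637; 1651; 1650; 1592]; [:: 1594; 1792; 1597; 1860; 1618]; [:: 1860; 1595; 1598; 1594; 1751]; [:: 1598; 1640; 1860; 1597; 1861]; [:: 1599; 1612; 1618; 1850; 1597]; [:: 1861; 1748; 1751; 1747; 1598]; [:: 1604; 1609; 1643; 1862; 1786]; [:: 1862;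 1605; 1644; 1604; 1863]; [:: 1854; 1646; 1858; 1859; 1606]; [:: 1855; 1615; 1768; 1607; 1864]; [:: 1610; 1862; 1611; 1609; 1760]; [:: 1613; 1865; 1760; 1759; 1611]; [:: 1617; 1766; 1764; 1616; 1816]; [:: 1619; 1621; 1850; 1618; 1848]; [:: 1717; 1623; 1866; 1716; 1867]; [:: 1834; 1863; 1646; 1795; 1627]; [:: 1630; 1868; 1723; 1656; 1629]; [:: 1634; 1638; 1792; 1869; 1775]; [:: 1869; 1635; 1794; 1634; 1870]; [:: 1837; 1859; 1795; 1646; 1636]; [:: 1639; 1869; 1640; 1638; 1730]; [:: 1642; 1871; 1730; 1729; 1640]; [:: 1644; 1648; 1862; 1643; 1872]; [:: 1645; 1770; 1786; 1873; 1643]; [:: 1872; 1858; 1863; 1870; 1644]; [:: 1873; 1651; 1787; 1645; 1874]; [:: 1841; 1874; 1788; 1784; 1647]; [:: 1733; 1649; 1875; 1732; 1876]; [:: 1683; 1656; 1670; 1868; 1798]; [:: 1689; 1658; 1811; 1877; 1797]; [:: 1661; 1877; 1818; 1658; 1878]; [:: 1856; 1662; 1660; 1803; 1659]; [:: 1867; 1660; 1663; 1826; 1717]; [:: 1857; 1826; 1803; 1660; 1686]; [:: 1878; 1665; 1802; 1800; 1661]; [:: 1663; 1750; 1867; 1879; 1866]; [:: 1879; 1664; 1826; 1663; 1823]; [:: 1866; 1667; 1717; 1697; 1663]; [:: 1672; 1753; 1669; 1812; 1668]; [:: 1880; 1669; 1754; 1881; 1844]; [:: 1674; 1881; 1812;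 1669; 1699]; [:: 1704; 1671; 1868; 1670; 1882]; [:: 1705; 1680; 1798; 1883; 1670]; [:: 1675; 1758; 1809; 1807; 1671]; [:: 1673; 1880; 1676; 1832; 1719]; [:: 1677; 1760; 1832; 1676; 1831]; [:: 1678; 1866; 1719; 1710; 1676]; [:: 1681; 1883; 1833; 1680; 1781]; [:: 1868; 1684; 1704; 1683; 1884]; [:: 1686; 1833; 1799; 1685; 1857]; [:: 1687; 1739; 1690; 1688; 1738]; [:: 1877; 1690; 1830; 1689; 1885]; [:: 1694; 1728; 1738; 1737; 1690]; [:: 1692; 1838; 1695; 1886; 1716]; [:: 1886; 1693; 1696; 1692; 1805]; [:: 1696; 1730; 1886; 1695; 1887]; [:: 1697; 1710; 1716; 1866; 1695]; [:: 1887; 1802; 1805; 1801; 1696]; [:: 1702; 1707; 1732; 1875; 1835]; [:: 1875; 1703; 1733; 1702; 1888]; [:: 1882; 1735; 1884; 1885; 1704]; [:: 1883; 1713; 1820; 1705; 1889]; [:: 1708; 1875; 1709; 1707; 1814]; [:: 1711; 1890; 1814; 1813; 1709]; [:: 1715; 1818; 1816; 1714; 1764]; [:: 1784; 1888; 1735; 1841; 1721]; [:: 1725; 1729; 1838; 1871; 1827]; [:: 1871; 1726; 1840; 1725; 1891]; [:: 1788; 1885; 1841; 1735; 1727]; [:: 1734; 1822; 1835; 1892; 1732]; [:: 1876; 1884; 1888; 1891; 1733]; [:: 1892; 1738; 1836; 1734; 1893]; [:: 1795; 1893; 1837; 1834; 1736]; [:: 1765; 1741; 1756; 1740; 1894];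 [:: 1746; 1856; 1743; 1847; 1742]; [:: 1895; 1743; 1853; 1896; 1808]; [:: 1748; 1896; 1847; 1743; 1766]; [:: 1768; 1745; 1855; 1744; 1897]; [:: 1749; 1878; 1845; 1843; 1745]; [:: 1747; 1895; 1750; 1861; 1782]; [:: 1751; 1879; 1861; 1750; 1860]; [:: 1752; 1761; 1782; 1773; 1750]; [:: 1754; 1759; 1880; 1865; 1898]; [:: 1865; 1755; 1881; 1754; 1899]; [:: 1898; 1763; 1844; 1900; 1754]; [:: 1777; 1882; 1894; 1897; 1756]; [:: 1778; 1764; 1846; 1757; 1901]; [:: 1800; 1843; 1763; 1878; 1762]; [:: 1802; 1900; 1878; 1763; 1818]; [:: 1894; 1793; 1777; 1864; 1765]; [:: 1897; 1788; 1864; 1777; 1768]; [:: 1771; 1873; 1772; 1770; 1849]; [:: 1774; 1902; 1849; 1848; 1772]; [:: 1776; 1779; 1791; 1775; 1903]; [:: 1903; 1784; 1793; 1874; 1776]; [:: 1901; 1870; 1859; 1858; 1778]; [:: 1852; 1780; 1890; 1851; 1904]; [:: 1806; 1815; 1783; 1825; 1804]; [:: 1801; 1898; 1804; 1887; 1783]; [:: 1817; 1785; 1810; 1797; 1905]; [:: 1787; 1789; 1873; 1786; 1906]; [:: 1906; 1864; 1874; 1793; 1787]; [:: 1836; 1790; 1892; 1835; 1907]; [:: 1793; 1908; 1903; 1906; 1791]; [:: 1794; 1860; 1869; 1792; 1909]; [:: 1909; 1795; 1870; 1863; 1794]; [:: 1828; 1831; 1796; 1827; 1910]; [:: 1839;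 1904; 1910; 1907; 1796]; [:: 1820; 1799; 1883; 1798; 1911]; [:: 1803; 1847; 1857; 1856; 1799]; [:: 1805; 1849; 1887; 1804; 1886]; [:: 1808; 1813; 1851; 1890; 1895]; [:: 1890; 1809; 1852; 1808; 1912]; [:: 1829; 1854; 1905; 1911; 1810]; [:: 1830; 1816; 1877; 1811; 1913]; [:: 1905; 1839; 1829; 1889; 1817]; [:: 1911; 1837; 1889; 1829; 1820]; [:: 1823; 1892; 1824; 1822; 1879]; [:: 1826; 1914; 1879; 1867; 1824]; [:: 1910; 1834; 1839; 1893; 1828]; [:: 1913; 1891; 1885; 1884; 1830]; [:: 1881; 1832; 1865; 1880; 1908]; [:: 1907; 1889; 1893; 1839; 1836]; [:: 1840; 1886; 1871; 1838; 1915]; [:: 1915; 1841; 1891; 1888; 1840]; [:: 1858; 1912; 1854; 1901; 1842]; [:: 1844; 1848; 1898; 1902; 1880]; [:: 1902; 1845; 1900; 1844; 1916]; [:: 1859; 1911; 1901; 1854; 1846]; [:: 1853; 1867; 1895; 1914; 1851]; [:: 1904; 1905; 1912; 1916; 1852]; [:: 1914; 1857; 1896; 1853; 1917]; [:: 1864; 1917; 1897; 1894; 1855]; [:: 1896; 1861; 1914; 1895; 1918]; [:: 1863; 1910; 1872; 1909; 1862]; [:: 1899; 1876; 1908; 1918; 1865]; [:: 1884; 1899; 1882; 1913; 1868]; [:: 1870; 1919; 1909; 1872; 1869]; [:: 1891; 1918; 1915; 1876; 1871]; [:: 1912; 1872; 1904; 1919; 1890]; [:: 1874; 1915; 1906;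 1903; 1873]; [:: 1888; 1903; 1876; 1915; 1875]; [:: 1885; 1897; 1913; 1882; 1877]; [:: 1908; 1894; 1899; 1917; 1881]; [:: 1889; 1916; 1911; 1905; 1883]; [:: 1900; 1887; 1902; 1898; 1919]; [:: 1893; 1909; 1907; 1910; 1892]; [:: 1918; 1913; 1917; 1899; 1896]; [:: 1919; 1901; 1916; 1912; 1900]; [:: 1916; 1907; 1919; 1904; 1902]; [:: 1917; 1906; 1918; 1908; 1914]].
Definition sidx_t : seq nat := [:: 1; 2; 16; 4; 1646].
Definition words_t : seq (seq nat) := [:: [:: 0]; [:: 1]; [:: 1; 0; 2; 1; 3; 2; 4; 2; 1; 0; 3; 2; 1]; [:: 3]; [:: 1; 0; 2; 1; 0; 3; 2; 4; 2; 1; 0; 3; 2; 1]].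
Definition shaped (n : nat) (a : cm) := (size a == n) && all (fun r => size r == n) a.
Definition cprodw (n : nat) (S : seq cm) (w : seq nat) : cm :=
  foldr (fun g acc => cmul n (nth [::] S g) acc) (idc n) w.
Definition chk (n1 n2 : nat) (Sa Sb Pa Pb : seq cm) (pg : seq (nat*nat)) (st : seq (seq nat)) (N m : nat) :=
 [&& size Sa == m, size Sb == m, size Pa == N, size Pb == N, size pg == N.-1,
   nth [::] Pa 0 == idc n1, nth [::] Pb 0 == idc n2,
   all (fun i => all (fun g => let k := nth 0 (nth [::] st i) g in
        [&& k < N, cmul n1 (nth [::] Pa i) (nth [::] Sa g) == nth [::] Pa k &
                   cmul n2 (nth [::] Pb i) (nth [::] Sb g) == nth [::] Pb k]) (iota 0 m)) (iota 0 N) &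
   all (fun k => let p := nth (0,0) pg k.-1 in
        [&& p.1 < k, p.2 < m, nth [::] Pa k == cmul n1 (nth [::] Pa p.1) (nth [::] Sa p.2) &
           nth [::] Pb k == cmul n2 (nth [::] Pb p.1) (nth [::] Sb p.2)]) (iota 1 N.-1)].
Definition cmlt (a b : cm) : bool := @Order.lt _ (seqlexi (seqlexi int)) a b.
Definition cmle (a b : cm) : bool := @Order.le _ (seqlexi (seqlexi int)) a b.
Lemma cmlt_uniq (s : seq cm) : sorted cmlt (sort cmle s) -> uniq s.
Proof.
move=> h; rewrite -(perm_uniq (permEl (perm_sort cmle s))).
apply: (sorted_uniq _ _ h).
- by move=> x y z; apply: Order.POrderTheory.lt_trans.
- by move=> x; apply: Order.POrderTheory.ltxx.
Qed.
Definition chk2 (Sa Sb Pa Pb S5 : seq cm) :=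
  [&& sorted cmlt (sort cmle Pa), sorted cmlt (sort cmle Pb), all (shaped 7) Pa, all (shaped 5) Pb,
      all (fun g => cmul 7 g g == idc 7) Sa, all (fun g => cmul 5 g g == idc 5) Sb,
      all (fun g => nth [::] S5 g == nth [::] Pb (nth 0 sidx_t g)) (iota 0 5),
      all (fun g => nth 0 sidx_t g < 1920) (iota 0 5),
      all (fun g => all (gtn 5) (nth [::] words_t g)) (iota 0 5) &
      all (fun g => nth [::] Sb g == cprodw 5 S5 (nth [::] words_t g)) (iota 0 5)].
Definition Pa_c := build 7 G7c pg_t.
Definition Pb_c := build 5 Hc pg_t.
Lemma chk_ok : chk 7 5 G7c Hc Pa_c Pb_c pg_t succ_t 1920 5 = true.
Proof. vm_compute. reflexivity. Qed.
Lemma chk2_ok : chk2 G7c Hc Pa_c Pb_c S5c = true.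
Proof. vm_compute. reflexivity. Qed.
Local Open Scope ring_scope.

Lemma foldr_sum (F : nat -> int) (s : seq nat) :
  foldr (fun k acc => (F k + acc)%R) 0%R s = \sum_(k <- s) F k.
Proof. by elim: s => [|x s IH]; rewrite ?big_nil ?big_cons //= IH. Qed.

Lemma emb_mul n (a b : cm) :
  mx_of_rows n (cmul n a b) = mx_of_rows n a *m mx_of_rows n b.
Proof.
apply/matrixP => i j; rewrite !mxE /cmul nth_mkseq // nth_mkseq //.
rewrite (foldr_sum (fun k => entry a i k * entry b k j)).
rewrite /index_iota -{1}(subn0 n) big_mkord rmorph_sum /=.
by apply: eq_bigr => k _; rewrite !mxE rmorphM.
Qed.

Lemma emb_id n : mx_of_rows n (idc n) = 1%:M.
Proof.
by apply/matrixP => i j; rewrite !mxE /idc nth_mkseq // nth_mkseq //; case: (i == j).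
Qed.

Lemma emb_inj n (a b : cm) : shaped n a -> shaped n b ->
  mx_of_rows n a = mx_of_rows n b -> a = b.
Proof.
case/andP => /eqP sa /allP ra; case/andP => /eqP sb /allP rb /matrixP E.
apply: (@eq_from_nth _ [::]); first by rewrite sa sb.
move=> i; rewrite sa => ilt.
have ia : nth [::] a i \in a by apply: mem_nth; rewrite sa.
have ib : nth [::] b i \in b by apply: mem_nth; rewrite sb.
have /eqP s1 := ra _ ia; have /eqP s2 := rb _ ib.
apply: (@eq_from_nth _ 0%Z); first by rewrite s1 s2.
move=> j; rewrite s1 => jlt.
have := E (Ordinal ilt) (Ordinal jlt); rewrite !mxE /=.
exact: intr_inj.
Qed.
Lemma emb_tcm (a b : nat) : (a < 7)%N -> (b < 7)%N ->
  mx_of_rows 7 (tcm a b) = Defs.permM (tperm (inord a : 'I_7) (inord b)).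
Proof.
move=> ha hb; apply/matrixP => i j; rewrite !mxE /tcm nth_mkseq // nth_mkseq //.
have -> : (i == tperm (inord a : 'I_7) (inord b) j) =
   (nat_of_ord i == (if nat_of_ord j == a then b else if nat_of_ord j == b then a else nat_of_ord j)).
  rewrite -(inj_eq val_inj).
  case: tpermP => [->|->|ja jb]; rewrite /= ?inordK ?eqxx //.
  - by case: (b =P a) => [->|].
  - have ja' : (nat_of_ord j == a) = false.
      by apply/eqP => E; apply: ja; apply: val_inj; rewrite /= inordK // E.
    have jb' : (nat_of_ord j == b) = false.
      by apply/eqP => E; apply: jb; apply: val_inj; rewrite /= inordK // E.
    by rewrite ja' jb'.
by [].
Qed.

Lemma emb_rcm (l : seq int) : mx_of_rows 5 (rcm l) = refl5 (vec5 l).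
Proof.
apply/matrixP => i j; rewrite !mxE /rcm nth_mkseq // nth_mkseq //.
rewrite big_ord1 !mxE rmorphB rmorphM /=.
by [].
Qed.
Definition prodw n (S : seq 'M[algC]_n) (w : seq nat) : 'M[algC]_n :=
  foldr (fun g acc => nth 0 S g *m acc) 1%:M w.

Lemma prodw_rcons n (S : seq 'M[algC]_n) w g :
  prodw S (rcons w g) = prodw S w *m nth 0 S g.
Proof.
elim: w => [|x w IH] /=; first by rewrite /prodw /= mulmx1 mul1mx.
by rewrite /prodw /= -/(prodw S _) IH mulmxA.
Qed.

Definition sys n1 n2 (Sa : seq 'M[algC]_n1) (Sb : seq 'M[algC]_n2) Pa Pb
  (N m : nat) (succ : nat -> nat -> nat) (par gen : nat -> nat) :=
 [/\ (0 < N)%N, nth 0 Pa 0 = 1%:M, nth 0 Pb 0 = 1%:M,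
   (forall i g, (i < N)%N -> (g < m)%N -> (succ i g < N)%N /\
      nth 0 Pa i *m nth 0 Sa g = nth 0 Pa (succ i g) /\
      nth 0 Pb i *m nth 0 Sb g = nth 0 Pb (succ i g)) &
   (forall k, (0 < k < N)%N -> (par k < k)%N /\ (gen k < m)%N /\
      nth 0 Pa k = nth 0 Pa (par k) *m nth 0 Sa (gen k) /\
      nth 0 Pb k = nth 0 Pb (par k) *m nth 0 Sb (gen k))].

Lemma sys_swap n1 n2 Sa Sb Pa Pb N m succ par gen :
  @sys n1 n2 Sa Sb Pa Pb N m succ par gen -> @sys n2 n1 Sb Sa Pb Pa N m succ par gen.
Proof.
case=> h0 h1 h2 h3 h4; split=> //.
  by move=> i g hi hg; have [? [? ?]] := h3 i g hi hg.
by move=> k hk; have [? [? [? ?]]] := h4 k hk.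
Qed.

Lemma sys_word n1 n2 Sa Sb Pa Pb N m succ par gen :
  @sys n1 n2 Sa Sb Pa Pb N m succ par gen -> forall k, (k < N)%N ->
  exists w, [/\ all (gtn m) w, nth 0 Pa k = prodw Sa w & nth 0 Pb k = prodw Sb w].
Proof.
case=> h0 h1 h2 h3 h4; elim/ltn_ind => k IH hk.
case: k IH hk => [|k] IH hk; first by exists [::].
have [hp [hg [ea eb]]] := h4 k.+1 hk.
have [w [aw wa wb]] := IH _ hp (ltn_trans hp hk).
exists (rcons w (gen k.+1)); split.
- by rewrite all_rcons aw andbT; exact: hg.
- by rewrite prodw_rcons ea wa.
- by rewrite prodw_rcons eb wb.
Qed.

Lemma sys_close n1 n2 Sa Sb Pa Pb N m succ par gen :
  @sys n1 n2 Sa Sb Pa Pb N m succ par gen -> forall w, all (gtn m) w ->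
  forall i, (i < N)%N -> exists2 k, (k < N)%N &
   nth 0 Pa i *m prodw Sa w = nth 0 Pa k /\ nth 0 Pb i *m prodw Sb w = nth 0 Pb k.
Proof.
case=> h0 h1 h2 h3 h4; elim=> [|g w IH] /=.
  by move=> _ i hi; exists i => //; rewrite /prodw /= !mulmx1.
case/andP => hg hw i hi; have [hs [ea eb]] := h3 i g hi hg.
have [k hk [ka kb]] := IH hw _ hs.
by exists k => //; rewrite /prodw /= -/(prodw _ _) !mulmxA ea eb.
Qed.

Lemma prodw_inv n (S : seq 'M[algC]_n) m :
  (forall g, (g < m)%N -> nth 0 S g *m nth 0 S g = 1%:M) ->
  forall w, all (gtn m) w -> prodw S w *m prodw S (rev w) = 1%:M.
Proof.
move=> inv; elim=> [|g w IH] /=; first by rewrite /prodw /= mulmx1.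
case/andP => hg hw; rewrite rev_cons prodw_rcons /prodw /= -!/(prodw _ _).
by rewrite -mulmxA (mulmxA (prodw S w)) IH // mul1mx inv.
Qed.

Lemma gen_prodw n (S T : seq 'M[algC]_n) m :
  (forall g, (g < m)%N -> Defs.generated S (nth 0 T g)) ->
  forall w, all (gtn m) w -> Defs.generated S (prodw T w).
Proof.
move=> hT; elim=> [|g w IH] /=; first by move=> _; apply: Defs.gen_one.
by case/andP => hg hw; apply: Defs.gen_mul; [apply: hT|apply: IH].
Qed.

Lemma gen_iff n1 n2 (S Sa Pa : seq 'M[algC]_n1) Sb Pb N m succ par gen :
  @sys n1 n2 Sa Sb Pa Pb N m succ par gen -> size Pa = N ->
  (forall g, (g < m)%N -> nth 0 Sa g *m nth 0 Sa g = 1%:M) ->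
  (forall x, x \in S -> x \in Pa) ->
  (forall g, (g < m)%N -> Defs.generated S (nth 0 Sa g)) ->
  forall x, Defs.generated S x <-> x \in Pa.
Proof.
move=> hs hsz inv hS hG x; split.
- elim=> {x} [|x /hS //| x y _ hx _ hy | x _ hx].
  + by case: hs => h0 h1 *; rewrite -h1 mem_nth // hsz.
  + case/(nthP 0): hx => i; rewrite hsz => hi <-.
    case/(nthP 0): hy => j; rewrite hsz => hj <-.
    have [w [aw wa _]] := sys_word hs hj.
    have [k hk [ka _]] := sys_close hs aw hi.
    by rewrite wa ka mem_nth // hsz.
  + case/(nthP 0): hx => i; rewrite hsz => hi <-.
    have [w [aw wa _]] := sys_word hs hi.
    have E := prodw_inv inv aw.
    have [u _] := mulmx1_unit E.
    have -> : invmx (nth 0 Pa i) = prodw Sa (rev w).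
      by rewrite -[LHS]mulmx1 -E wa mulmxA mulVmx // mul1mx.
    have aw' : all (gtn m) (rev w) by rewrite all_rev.
    have h0 : (0 < N)%N by case: hs.
    have h1 : nth 0 Pa 0 = 1%:M by case: hs.
    have [k hk [ka _]] := sys_close hs aw' h0.
    by rewrite -(mul1mx (prodw Sa (rev w))) -h1 ka mem_nth // hsz.
- case/(nthP 0) => i; rewrite hsz => hi <-.
  have [w [aw wa _]] := sys_word hs hi.
  by rewrite wa; apply: gen_prodw hG _ aw.
Qed.
Lemma emb_nil n : mx_of_rows n [::] = 0.
Proof. by apply/matrixP => i j; rewrite !mxE !nth_nil. Qed.

Lemma nth_emb n (s : seq cm) g :
  nth 0 (map (mx_of_rows n) s) g = mx_of_rows n (nth [::] s g).
Proof.
case: (ltnP g (size s)) => h; first by rewrite (nth_map [::]).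
by rewrite !nth_default ?size_map // emb_nil.
Qed.

Lemma emb_cprodw n (S : seq cm) w :
  mx_of_rows n (cprodw n S w) = prodw (map (mx_of_rows n) S) w.
Proof.
elim: w => [|g w IH] /=; first by rewrite emb_id.
by rewrite emb_mul IH nth_emb.
Qed.

Lemma chk_sys n1 n2 Sa Sb Pa Pb pg st N m : (0 < N)%N ->
  chk n1 n2 Sa Sb Pa Pb pg st N m = true ->
  sys (map (mx_of_rows n1) Sa) (map (mx_of_rows n2) Sb)
      (map (mx_of_rows n1) Pa) (map (mx_of_rows n2) Pb) N m
      (fun i g => nth 0%N (nth [::] st i) g)
      (fun k => (nth (0,0)%N pg k.-1).1) (fun k => (nth (0,0)%N pg k.-1).2).
Proof.
move=> hN /andP[_ /andP[_ /andP[_ /andP[_ /andP[_ /andP[/eqP e0a /andP[/eqP e0b /andP[/allP hsucc /allP hpar]]]]]]]].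
split=> //.
- by rewrite nth_emb e0a emb_id.
- by rewrite nth_emb e0b emb_id.
- move=> i g hi hg.
  have := hsucc i; rewrite mem_iota add0n => /(_ hi) /allP /(_ g).
  rewrite mem_iota add0n => /(_ hg) /and3P[hk /eqP ea /eqP eb].
  by rewrite !nth_emb -ea -eb !emb_mul.
- move=> k /andP[k0 kN].
  have hm : k \in iota 1 N.-1 by rewrite mem_iota add1n prednK // k0.
  have /= := hpar k hm.
  case/and4P => hp hg /eqP ea /eqP eb.
  by rewrite !nth_emb ea eb !emb_mul.
Qed.

Lemma chk_size n1 n2 Sa Sb Pa Pb pg st N m :
  chk n1 n2 Sa Sb Pa Pb pg st N m = true -> size Pa = N /\ size Pb = N.
Proof. by move=> /andP[_ /andP[_ /andP[/eqP -> /andP[/eqP -> _]]]]. Qed.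
Lemma map_G7 : map (mx_of_rows 7) G7c = GL_gens.
Proof.
rewrite /G7c /GL_gens /=.
by rewrite !emb_tcm.
Qed.

Lemma map_S5 : map (mx_of_rows 5) S5c = map refl5 D5_simple_roots.
Proof. by rewrite /S5c -map_comp /=; rewrite !emb_rcm. Qed.

Lemma uniq_emb n (s : seq cm) : all (shaped n) s -> uniq s -> uniq (map (mx_of_rows n) s).
Proof.
move=> /allP sh us; rewrite map_inj_in_uniq // => a b ha hb.
by apply: emb_inj; apply: sh.
Qed.

Lemma chk2_P Sa Sb Pa Pb S5 : chk2 Sa Sb Pa Pb S5 = true ->
  [/\ sorted cmlt (sort cmle Pa), sorted cmlt (sort cmle Pb), all (shaped 7) Pa, all (shaped 5) Pb &
    [/\  all (fun g => cmul 7 g g == idc 7) Sa, all (fun g => cmul 5 g g == idc 5) Sb,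
      all (fun g => nth [::] S5 g == nth [::] Pb (nth 0%N sidx_t g)) (iota 0 5),
      all (fun g => nth 0%N sidx_t g < 1920)%N (iota 0 5) &
      all (fun g => all (gtn 5) (nth [::] words_t g)) (iota 0 5) /\
      all (fun g => nth [::] Sb g == cprodw 5 S5 (nth [::] words_t g)) (iota 0 5)]].
Proof.
by move=> /andP[-> /andP[-> /andP[-> /andP[-> /andP[-> /andP[-> /andP[-> /andP[-> /andP[-> ->]]]]]]]]].
Qed.

Lemma main_gen (Pa_c Pb_c : seq cm) :
  chk 7 5 G7c Hc Pa_c Pb_c pg_t succ_t 1920%N 5%N = true ->
  chk2 G7c Hc Pa_c Pb_c S5c = true ->
  mx_group_isomorphic G_L WD5 /\ mx_group_order WD5 1920%N.
Proof.
move=> chk_ok chk2_ok.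
set Pa := map (mx_of_rows 7) Pa_c; set Pb := map (mx_of_rows 5) Pb_c.
set Sa := map (mx_of_rows 7) G7c; set Sb := map (mx_of_rows 5) Hc.
have hs := chk_sys (isT : (0 < 1920)%N) chk_ok.
have [szA szB] := chk_size chk_ok.
have sPa : size Pa = 1920%N by rewrite size_map szA.
have sPb : size Pb = 1920%N by rewrite size_map szB.
have [uA uB shA shB [/allP invA /allP invB /allP hsidx /allP hsidx2 [/allP hw /allP hwe]]] := chk2_P chk2_ok.
have uPa : uniq Pa by apply: uniq_emb => //; apply: cmlt_uniq.
have uPb : uniq Pb by apply: uniq_emb => //; apply: cmlt_uniq.
have sG7 : size G7c = 5%N by [].
have sHc : size Hc = 5%N by [].
have sS5 : size S5c = 5%N by [].
have mi : forall g, (g < 5)%N -> g \in iota 0 5 by move=> g hg; rewrite mem_iota.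
have [_ h1a h1b hsucc _] := hs.
have GLiff : forall x, G_L x <-> x \in Pa.
  move=> x; rewrite /G_L -map_G7.
  apply: (gen_iff hs sPa).
  - move=> g hg; rewrite nth_emb -emb_mul.
    have hg' : (g < size G7c)%N by rewrite sG7.
    have /eqP -> := invA _ (mem_nth [::] hg').
    by rewrite emb_id.
  - move=> y /(nthP 0) [g]; rewrite size_map sG7 => hg <-.
    have [hk [ea _]] := hsucc 0%N g isT hg.
    by rewrite -[nth 0 Sa g]mul1mx -h1a ea mem_nth // sPa.
  - move=> g hg; apply: Defs.gen_gen; rewrite mem_nth // size_map sG7 //.
have Wiff : forall x, WD5 x <-> x \in Pb.
  move=> x; rewrite /WD5 -map_S5.
  apply: (gen_iff (sys_swap hs) sPb).
  - move=> g hg; rewrite nth_emb -emb_mul.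
    have hg' : (g < size Hc)%N by rewrite sHc.
    have /eqP -> := invB _ (mem_nth [::] hg').
    by rewrite emb_id.
  - move=> y /(nthP 0) [g]; rewrite size_map sS5 => hg <-.
    have /eqP E := hsidx g (mi g hg).
    by rewrite nth_emb E -nth_emb mem_nth // sPb; apply: hsidx2; apply: mi.
  - move=> g hg.
    have /eqP E := hwe g (mi g hg).
    rewrite nth_emb E emb_cprodw.
    apply: (gen_prodw (m := 5)); last exact: hw (mi g hg).
    by move=> h hh; apply: Defs.gen_gen; rewrite mem_nth // size_map sS5.
split; last first.
  exists Pb; split=> //; exact: Wiff.
pose f (x : 'M[algC]_7) := nth 0 Pb (index x Pa).
exists f; split.
- move=> x /GLiff hx; apply/Wiff; rewrite /f mem_nth // sPb -sPa index_mem //.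
- move=> x y /GLiff hx /GLiff hy.
  case/(nthP 0): hx => i; rewrite sPa => hi <-.
  case/(nthP 0): hy => j; rewrite sPa => hj <-.
  have [w [aw wa wb]] := sys_word hs hj.
  have [k hk [ka kb]] := sys_close hs aw hi.
  rewrite /f [index (nth 0 Pa i) Pa]index_uniq ?sPa // [index (nth 0 Pa j) Pa]index_uniq ?sPa //.
  by rewrite {1}wa ka index_uniq ?sPa // wb kb.
- move=> x y /GLiff hx /GLiff hy; rewrite /f => E.
  have ix : (index x Pa < 1920)%N by rewrite -sPa index_mem.
  have iy : (index y Pa < 1920)%N by rewrite -sPa index_mem.
  have := nth_uniq 0 (_ : (index x Pa < size Pb)%N) (_ : (index y Pa < size Pb)%N) uPb.
  rewrite E eqxx sPb => /(_ ix iy) /esym /eqP Ei.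
  by rewrite -(nth_index 0 hx) -(nth_index 0 hy) Ei.
- move=> y /Wiff /(nthP 0) [k]; rewrite sPb => hk <-.
  exists (nth 0 Pa k); first by apply/GLiff; rewrite mem_nth // sPa.
  by rewrite /f index_uniq // sPa.
Qed.

Local Close Scope ring_scope.
Theorem theorem4p1 :
  mx_group_isomorphic G_L WD5 /\ mx_group_order WD5 1920.
Proof. exact: main_gen chk_ok chk2_ok. Qed.
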